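(* Let $k=0$ and let $a$ be a regular scale factor which is an even function on $\mathbb R$, such that either $\infty>\dot a(0^+)>0$, or $\dot a(0)=0$ but the $n$th derivative $a^{(n)}(0)\ne0$ for some $n$. Then $g_{\theta\theta}(\tau,\rho)$ and $g_{\phi\phi}(\tau,\rho,\theta)$ are continuous on $D_{\mathrm{polar}}$ (with values at $\rho=\rho_{\mathcal M_\tau}$ defined as limits as $t_0\to0$) and vanish at $(\tau,\rho_{\mathcal M_\tau})$ for every $\tau>0$.
   Context: A function $a:[0,\infty)\to[0,\infty)$ is a regular scale factor if: (a) $a(0)=0$; (b) $a$ is increasing and continuous on $[0,\infty)$, twice continuously differentiable on $(0,\infty)$, with an inverse function on $[0,\infty)$; (c) $\frac{a(t)\ddot a(t)}{\dot a(t)^2}\le1$ for all $t>0$ (presupposing $\dot a(t)\ne0$). Here $a$ is regarded on $\mathbb R$ via $a(-t)=a(t)$; $\dot a(0^+)=\lim_{t\to0^+}\dot a(t)$. For $0<s<\tau$, $\chi_s(\tau)=\int_s^\tau\frac{1}{a(t)}\frac{a(\tau)}{\sqrt{a^2(\tau)-a^2(t)}}dt$. For $\tau>0$, $\rho_{\mathcal M_\tau}=\int_0^\tau\frac{a(t)}{\sqrt{a^2(\tau)-a^2(t)}}dt$; for $0<\rho<2\rho_{\mathcal M_\tau}$, $t_0(\tau,\rho)$ is the unique $t_0\in(-\tau,\tau)$ with $\rho=\int_{t_0}^\tau\frac{a(t)}{\sqrt{a^2(\tau)-a^2(t)}}dt$. Define $f(\tau,t_0)=\int_{t_0}^{\tau}\frac{\ddot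 a(t)}{\dot a(t)^2}\left(\frac{\sqrt{a^2(\tau)-a^2(t_0)}}{\sqrt{a^2(\tau)-a^2(t)}}-1\right)dt$ for $0\le t_0<\tau$, $f(\tau,t_0)=2f(\tau,0)-f(\tau,-t_0)$ for $-\tau<t_0<0$, and $g_{\tau\tau}(\tau,\rho)=-[1-\dot a(\tau)f(\tau,t_0(\tau,\rho))]^2$. Let $\rho_{\max}(\tau)=\inf\{\rho\in(0,2\rho_{\mathcal M_\tau}):g_{\tau\tau}(\tau,\rho)=0\}$ if nonempty, else $2\rho_{\mathcal M_\tau}$. $D_{\mathrm{polar}}=\{(\tau,\rho,\theta,\phi):\tau>0,\ 0<\rho<\rho_{\max}(\tau),\ \theta\in I_\pi,\ \phi\in I_{2\pi}\}$ with $I_\pi,I_{2\pi}$ open intervals of lengths $\pi,2\pi$. For $t_0=t_0(\tau,\rho)\ne0$: $g_{\theta\theta}(\tau,\rho)=a^2(t_0)\chi_{|t_0|}(\tau)^2$ and $g_{\phi\phi}(\tau,\rho,\theta)=g_{\theta\theta}(\tau,\rho)\sin^2\theta$. *)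

(* Defs.v *)
From Stdlib Require Import Reals ClassicalEpsilon.
From Coquelicot Require Import Coquelicot.
Open Scope R_scope.

Definition ad (a : R -> R) : R -> R := Derive a.
Definition add (a : R -> R) : R -> R := Derive (Derive a).

Definition regular_scale_factor (a : R -> R) : Prop :=
  a 0 = 0 /\
  (forall t, 0 <= t -> 0 <= a t) /\
  (forall x y, 0 <= x -> x < y -> a x < a y) /\
  (forall t, 0 <= t -> filterlim a (within (fun x => 0 <= x) (locally t)) (locally (a t))) /\
  (forall t, 0 < t -> ex_derive a t /\ ex_derive (Derive a) t /\ continuous (Derive (Derive a)) t) /\
  (forall y, 0 <= y -> exists x, 0 <= x /\ a x = y) /\
  (forall t, 0 < t -> ad a t <> 0 /\ a t * add a t / (ad a t ^ 2) <= 1).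

Definition even_fun (a : R -> R) : Prop := forall t, a (- t) = a t.

Definition imp_int (f : R -> R) (l u : R) : R := RInt_gen f (at_right l) (at_left u).

Definition chi (a : R -> R) (s tau : R) : R :=
  imp_int (fun t => / a t * (a tau / sqrt (a tau ^ 2 - a t ^ 2))) s tau.

Definition rho_of (a : R -> R) (tau t0 : R) : R :=
  imp_int (fun t => a t / sqrt (a tau ^ 2 - a t ^ 2)) t0 tau.

Definition rhoM (a : R -> R) (tau : R) : R := rho_of a tau 0.

Definition t0f (a : R -> R) (tau rho : R) : R :=
  epsilon (inhabits 0) (fun t0 => - tau < t0 < tau /\ rho = rho_of a tau t0).

Definition f_pos (a : R -> R) (tau t0 : R) : R :=
  imp_int (fun t => add a t / (ad a t ^ 2) *
     (sqrt (a tau ^ 2 - a t0 ^ 2) / sqrt (a tau ^ 2 - a t ^ 2) - 1)) t0 tau.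

Definition f_fun (a : R -> R) (tau t0 : R) : R :=
  if Rle_dec 0 t0 then f_pos a tau t0 else 2 * f_pos a tau 0 - f_pos a tau (- t0).

Definition g_tautau (a : R -> R) (tau rho : R) : R :=
  - (1 - ad a tau * f_fun a tau (t0f a tau rho)) ^ 2.

(* rho_max(tau): infimum of zeros of g_tautau in (0, 2 rhoM), else 2 rhoM
   (Glb_Rbar of the empty set is p_infty) *)
Definition rho_max (a : R -> R) (tau : R) : R :=
  match Glb_Rbar (fun rho => 0 < rho < 2 * rhoM a tau /\ g_tautau a tau rho = 0) with
  | Finite x => x
  | _ => 2 * rhoM a tau
  end.

(* D_polar, with I_pi = (c1, c1 + PI), I_2pi = (c2, c2 + 2 PI);
   points are (((tau, rho), theta), phi) *)
Definition D_polar (a : R -> R) (c1 c2 : R) (p : R * R * R * R) : Prop :=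
  let '(tau, rho, theta, phi) := p in
  0 < tau /\ 0 < rho < rho_max a tau /\ c1 < theta < c1 + PI /\ c2 < phi < c2 + 2 * PI.

Definition gthth_t0 (a : R -> R) (tau t0 : R) : R :=
  a t0 ^ 2 * chi a (Rabs t0) tau ^ 2.

(* g_thetatheta, with the value at t0 = 0 (i.e. rho = rhoM) defined as the limit t0 -> 0 *)
Definition g_thth (a : R -> R) (tau rho : R) : R :=
  let t0 := t0f a tau rho in
  if Req_EM_T t0 0 then real (Lim (gthth_t0 a tau) 0) else gthth_t0 a tau t0.

Definition g_phph (a : R -> R) (tau rho theta : R) : R :=
  g_thth a tau rho * sin theta ^ 2.

(* Main.v *)
Require Import Defs.
From Stdlib Require Import Reals Lra ClassicalEpsilon Classical FunctionalExtensionality.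
From Coquelicot Require Import Coquelicot.
Open Scope R_scope.

Definition ct1 (f : R -> R) x := forall eps, 0 < eps -> exists d, 0 < d /\
  forall y, Rabs (y - x) < d -> Rabs (f y - f x) < eps.
Definition ct2 (G : R -> R -> R) x y := forall eps, 0 < eps -> exists d, 0 < d /\
  forall u v, Rabs (u - x) < d -> Rabs (v - y) < d -> Rabs (G u v - G x y) < eps.

Lemma ballR x e y : ball x e y <-> Rabs (y - x) < e.
Proof. reflexivity. Qed.

Lemma ct1_of f x : continuous f x -> ct1 f x.
Proof.
  intros H eps Heps. destruct (proj1 (filterlim_locally f (f x)) H (mkposreal _ Heps)) as [d Hd].
  exists d; split; [apply cond_pos|]. intros y Hy. apply Hd. exact Hy.
Qed.

Lemma of_ct1 f x : ct1 f x -> continuous f x.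
Proof.
  intros H. apply filterlim_locally. intros [eps Heps].
  destruct (H eps Heps) as [d [Hd H']]. exists (mkposreal _ Hd). intros y Hy. apply H'. exact Hy.
Qed.

Lemma ct2_of G x y : continuous (fun p : R * R => G (fst p) (snd p)) (x, y) -> ct2 G x y.
Proof.
  intros H eps Heps. destruct (proj1 (filterlim_locally _ _) H (mkposreal _ Heps)) as [d Hd].
  exists d; split; [apply cond_pos|]. intros u v Hu Hv. apply (Hd (u, v)). split; assumption.
Qed.

Lemma of_ct2 G x y : ct2 G x y -> continuous (fun p : R * R => G (fst p) (snd p)) (x, y).
Proof.
  intros H. apply filterlim_locally. intros [eps Heps].
  destruct (H eps Heps) as [d [Hd H']]. exists (mkposreal _ Hd). intros [u v] [Hu Hv]. apply H'; assumption.
Qed.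

Lemma ct2_slice G x y : ct2 G x y -> ct1 (G x) y.
Proof.
  intros H eps Heps. destruct (H eps Heps) as [d [Hd H']]. exists d; split; auto.
  intros z Hz. apply H'; auto. rewrite Rminus_eq_0, Rabs_R0; auto.
Qed.

Lemma a_abs a : even_fun a -> forall x, a x = a (Rabs x).
Proof. intros He x. unfold Rabs; destruct (Rcase_abs x); try reflexivity. rewrite He. reflexivity. Qed.

Lemma a_lt a : regular_scale_factor a -> even_fun a -> forall x y, Rabs x < Rabs y -> a x < a y.
Proof.
  intros Ha He x y H. rewrite (a_abs a He x), (a_abs a He y).
  destruct Ha as (_&_&Hi&_). apply Hi; auto. apply Rabs_pos.

Qed.

Lemma a_le a : regular_scale_factor a -> even_fun a -> forall x y, Rabs x <= Rabs y -> a x <= a y.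
Proof.
  intros Ha He x y H. destruct H. left; apply a_lt; auto.
  rewrite (a_abs a He x), (a_abs a He y), H. lra.
Qed.

Lemma a_nonneg a : regular_scale_factor a -> even_fun a -> forall x, 0 <= a x.
Proof.
  intros Ha He x. rewrite (a_abs a He x). destruct Ha as (_&H&_). apply H, Rabs_pos.
Qed.

Lemma a_pos a : regular_scale_factor a -> even_fun a -> forall x, x <> 0 -> 0 < a x.
Proof.
  intros Ha He x Hx. assert (H0 : a 0 = 0) by apply Ha. rewrite <- H0.
  apply a_lt; auto. rewrite Rabs_R0. apply Rabs_pos_lt; auto.
Qed.

Lemma a_cont a : regular_scale_factor a -> even_fun a -> forall x, continuous a x.
Proof.
  intros Ha He x. destruct Ha as (_&_&_&Hc&_).
  apply (continuous_ext (fun y => a (Rabs y))). intros y; symmetry; apply a_abs; auto.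
  unfold continuous. eapply filterlim_comp. 2: apply (Hc (Rabs x) (Rabs_pos x)).
  unfold filterlim, filter_le, filtermap, within. intros P [e He']. generalize (continuous_Rabs x); intros Hr.
  destruct (proj1 (filterlim_locally _ _) Hr e) as [d Hd]. exists d. intros y Hy.
  apply He'. apply Hd. auto. apply Rabs_pos.
Qed.

Lemma ad_deriv a : regular_scale_factor a -> forall t, 0 < t -> is_derive a t (Derive a t).
Proof. intros Ha t Ht. apply Derive_correct. apply Ha; auto. Qed.

Lemma ad_pos a : regular_scale_factor a -> forall t, 0 < t -> 0 < Derive a t.
Proof.
  intros Ha t Ht. assert (Hne : Derive a t <> 0) by (apply Ha; auto).
  destruct (Rlt_or_le 0 (Derive a t)) as [H|H]; auto. exfalso.
  assert (Hl : Derive a t < 0) by lra.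
  generalize (proj1 (is_derive_Reals _ _ _) (ad_deriv a Ha t Ht)); intros Hd.
  destruct (Hd (- Derive a t / 2)) as [d Hd']. lra.
  set (h := Rmin (d / 2) 1).
  assert (Hh : 0 < h) by (unfold h; destruct d; simpl; apply Rmin_pos; lra).
  assert (Hh2 : h < d) by (unfold h; destruct d; simpl; generalize (Rmin_l (pos/2) 1); lra).
  specialize (Hd' h (Rgt_not_eq _ _ Hh)). rewrite Rabs_pos_eq in Hd' by lra. specialize (Hd' Hh2).
  assert (Hinc : a t < a (t + h)) by (apply Ha; lra).
  assert (0 < (a (t + h) - a t) / h) by (apply Rdiv_lt_0_compat; lra).
  apply Rabs_def2 in Hd'. lra.
Qed.

Lemma ad_cont a : regular_scale_factor a -> forall t, 0 < t -> continuous (Derive a) t.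
Proof. intros Ha t Ht. apply (ex_derive_continuous (V:=R_NormedModule) (Derive a)). apply Ha; auto. Qed.

Lemma ball_R (x e y : R) : ball x e y -> - e < y - x < e.
Proof. intros H. change (Rabs (y - x) < e) in H. apply Rabs_def2 in H. lra. Qed.

Lemma ct2_fst x y : ct2 (fun u v => u) x y.
Proof. intros e He. exists e; split; auto. Qed.
Lemma ct2_snd x y : ct2 (fun u v => v) x y.
Proof. intros e He. exists e; split; auto. Qed.
Lemma ct2_const c x y : ct2 (fun u v => c) x y.
Proof. intros e He. exists 1; split; [lra|]. intros. rewrite Rminus_eq_0, Rabs_R0; auto. Qed.

Lemma ct2_comp1 f G x y : ct1 f (G x y) -> ct2 G x y -> ct2 (fun u v => f (G u v)) x y.
Proof.
  intros Hf HG e He. destruct (Hf e He) as [d1 [Hd1 H1]]. destruct (HG d1 Hd1) as [d2 [Hd2 H2]].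
  exists d2; split; auto.
Qed.

Lemma ct2_plus F G x y : ct2 F x y -> ct2 G x y -> ct2 (fun u v => F u v + G u v) x y.
Proof.
  intros HF HG. apply ct2_of.
  apply (continuous_plus (fun p : R * R => F (fst p) (snd p)) (fun p : R * R => G (fst p) (snd p)));
  apply of_ct2; auto.
Qed.

Lemma ct2_mult F G x y : ct2 F x y -> ct2 G x y -> ct2 (fun u v => F u v * G u v) x y.
Proof.
  intros HF HG. apply ct2_of.
  apply (continuous_mult (fun p : R * R => F (fst p) (snd p)) (fun p : R * R => G (fst p) (snd p)));
  apply of_ct2; auto.
Qed.

Lemma ct2_ext F G x y : (forall u v, F u v = G u v) -> ct2 F x y -> ct2 G x y.
Proof. intros He HF e H. destruct (HF e H) as [d [Hd H']]. exists d; split; auto.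
  intros u v Hu Hv. rewrite <- !He. auto. Qed.

Lemma ct2_opp F x y : ct2 F x y -> ct2 (fun u v => - F u v) x y.
Proof.
  intros HF. apply (ct2_ext (fun u v => -1 * F u v)). intros; ring.
  apply ct2_mult; auto. apply ct2_const.
Qed.

Lemma ct2_minus F G x y : ct2 F x y -> ct2 G x y -> ct2 (fun u v => F u v - G u v) x y.
Proof. intros. apply ct2_plus; auto. apply ct2_opp; auto. Qed.

Lemma ct2_inv F x y : ct2 F x y -> F x y <> 0 -> ct2 (fun u v => / F u v) x y.
Proof. intros HF Hn. apply (ct2_comp1 Rinv F); auto. apply ct1_of, continuous_Rinv; auto. Qed.

Lemma ct2_sqrt F x y : ct2 F x y -> ct2 (fun u v => sqrt (F u v)) x y.
Proof. intros HF. apply (ct2_comp1 sqrt F); auto. apply ct1_of, continuous_sqrt. Qed.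

Lemma ct2_ext0 F G x y : (forall u v, F u v = G u v) -> ct2 F x y -> ct2 G x y.
Proof. intros He HF e H. destruct (HF e H) as [d [Hd H']]. exists d; split; auto.
  intros u v Hu Hv. rewrite <- !He. auto. Qed.

Definition Dq (a : R -> R) tau s :=
  if Req_EM_T s 0 then Derive a tau else (a tau - a (tau - s * s)) / (s * s).
Definition Kf a tau s := 2 / sqrt ((a tau + a (tau - s * s)) * Dq a tau s).
Definition Grho a tau s := a (tau - s * s) * Kf a tau s.
Definition Gchi a tau s := a tau / a (tau - s * s) * Kf a tau s.

Lemma Dq_pos a : regular_scale_factor a -> even_fun a ->
  forall tau s, 0 < tau -> s * s < 2 * tau -> 0 < Dq a tau s.
Proof.
  intros Ha He tau s Ht Hs. unfold Dq. destruct (Req_EM_T s 0).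
  apply ad_pos; auto.
  apply Rdiv_lt_0_compat. 2: { assert (0 < s * s) by (apply Rsqr_pos_lt; auto). lra. }
  assert (a (tau - s * s) < a tau) by (apply a_lt; auto;
    assert (0 < s * s) by (apply Rsqr_pos_lt; auto);
    rewrite (Rabs_pos_eq tau) by lra; apply Rabs_def1; lra).
  lra.
Qed.

Lemma ct_a a : regular_scale_factor a -> even_fun a -> forall x, ct1 a x.
Proof. intros. apply ct1_of, a_cont; auto. Qed.

Lemma Dq_cont a : regular_scale_factor a -> even_fun a ->
  forall tau s, 0 < tau -> ct2 (Dq a) tau s.
Proof.
  intros Ha He tau s Ht. destruct (Req_EM_T s 0) as [Hs|Hs].
  - subst s. intros e He0.
    destruct (ct1_of _ _ (ad_cont a Ha tau Ht) e He0) as [d1 [Hd1 H1]].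
    set (d := Rmin 1 (Rmin (d1 / 2) (tau / 2))).
    assert (Hd : 0 < d) by (unfold d; repeat apply Rmin_pos; lra).
    assert (Hdl : d <= 1 /\ d <= d1 / 2 /\ d <= tau / 2) by
      (unfold d; repeat split; [apply Rmin_l| |];
       [eapply Rle_trans; [apply Rmin_r| apply Rmin_l] | eapply Rle_trans; [apply Rmin_r| apply Rmin_r]]).
    exists d; split; auto. intros u v Hu Hv.
    rewrite Rminus_0_r in Hv.
    unfold Dq at 2. destruct (Req_EM_T 0 0) as [_|C]; [|congruence].
    unfold Dq. destruct (Req_EM_T v 0) as [Hv0|Hv0].
    + apply H1. lra.
    + assert (Hvv : 0 < v * v) by (apply Rsqr_pos_lt; auto).
      assert (Hvv2 : v * v < d) by (assert (Rabs v * Rabs v < 1 * d) by (apply Rmult_le_0_lt_compat; try apply Rabs_pos; lra);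
                                    rewrite <- Rabs_mult, Rabs_pos_eq in H by lra; lra).
      apply Rabs_def2 in Hu.
      destruct (MVT_gen a (u - v * v) u (Derive a)) as [c [Hc Hm]].
      * intros x Hx. apply ad_deriv; auto. rewrite Rmin_left in Hx by lra. lra.
      * intros x _. apply continuity_pt_filterlim. apply a_cont; auto.
      * rewrite Rmin_left in Hc by lra. rewrite Rmax_right in Hc by lra.
        replace ((a u - a (u - v * v)) / (v * v)) with (Derive a c).
        apply H1. apply Rabs_def1; lra.
        rewrite Hm. field. lra.
  - assert (Hq : ct2 (fun u v => (a u - a (u - v * v)) / (v * v)) tau s).
    { unfold Rdiv. apply ct2_mult. apply ct2_minus. apply (ct2_comp1 a (fun u v => u)). apply ct_a; auto. apply ct2_fst.
      apply (ct2_comp1 a (fun u v => u - v * v)). apply ct_a; auto.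
      apply ct2_minus. apply ct2_fst. apply ct2_mult; apply ct2_snd.
      apply ct2_inv. apply ct2_mult; apply ct2_snd. intro C. apply Hs. apply Rsqr_0_uniq. exact C. }
    intros e He0. destruct (Hq e He0) as [d [Hd H]].
    assert (Has : 0 < Rabs s) by (apply Rabs_pos_lt; auto).
    exists (Rmin d (Rabs s)); split. apply Rmin_pos; auto.
    intros u v Hu Hv. unfold Dq. destruct (Req_EM_T s 0); [congruence|].
    destruct (Req_EM_T v 0) as [Hv0|Hv0].
    + exfalso. subst v. generalize (Rmin_r d (Rabs s)). rewrite Rminus_0_l, Rabs_Ropp in Hv. lra.
    + apply H; eapply Rlt_le_trans; eauto; apply Rmin_l.
Qed.

Lemma Kf_arg_pos a : regular_scale_factor a -> even_fun a ->
  forall tau s, 0 < tau -> s * s < 2 * tau -> 0 < (a tau + a (tau - s * s)) * Dq a tau s.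
Proof.
  intros Ha He tau s Ht Hs. apply Rmult_lt_0_compat.
  generalize (a_pos a Ha He tau (Rgt_not_eq _ _ Ht)) (a_nonneg a Ha He (tau - s * s)); lra.
  apply Dq_pos; auto.
Qed.

Lemma Kf_pos a : regular_scale_factor a -> even_fun a ->
  forall tau s, 0 < tau -> s * s < 2 * tau -> 0 < Kf a tau s.
Proof.
  intros. unfold Kf. apply Rdiv_lt_0_compat. lra. apply sqrt_lt_R0, Kf_arg_pos; auto.
Qed.

Lemma Kf_cont a : regular_scale_factor a -> even_fun a ->
  forall tau s, 0 < tau -> s * s < 2 * tau -> ct2 (Kf a) tau s.
Proof.
  intros Ha He tau s Ht Hs. unfold Kf, Rdiv. apply ct2_mult. apply ct2_const.
  apply ct2_inv. apply ct2_sqrt. apply ct2_mult. apply ct2_plus.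
  apply (ct2_comp1 a (fun u v => u)). apply ct_a; auto. apply ct2_fst.
  apply (ct2_comp1 a (fun u v => u - v * v)). apply ct_a; auto.
  apply ct2_minus. apply ct2_fst. apply ct2_mult; apply ct2_snd.
  apply Dq_cont; auto.
  apply Rgt_not_eq, sqrt_lt_R0, Kf_arg_pos; auto.
Qed.

Lemma Kf_eq a : regular_scale_factor a -> even_fun a ->
  forall tau s, 0 < tau -> 0 < s -> s * s < 2 * tau ->
  Kf a tau s = 2 * s / sqrt (a tau ^ 2 - a (tau - s * s) ^ 2).
Proof.
  intros Ha He tau s Ht Hs Hs2. unfold Kf, Dq.
  destruct (Req_EM_T s 0); [lra|].
  assert (Hss : 0 < s * s) by nra.
  replace ((a tau + a (tau - s * s)) * ((a tau - a (tau - s * s)) / (s * s)))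
    with ((a tau ^ 2 - a (tau - s * s) ^ 2) / (s * s)) by (field; lra).
  rewrite sqrt_div_alt by auto. rewrite sqrt_square by lra.
  assert (0 < sqrt (a tau ^ 2 - a (tau - s * s) ^ 2)).
  { apply sqrt_lt_R0. generalize (Kf_arg_pos a Ha He tau s Ht Hs2). unfold Dq.
    destruct (Req_EM_T s 0); [lra|]. intro H. 
    replace ((a tau + a (tau - s * s)) * ((a tau - a (tau - s * s)) / (s * s)))
      with ((a tau ^ 2 - a (tau - s * s) ^ 2) / (s * s)) in H by (field; lra).
    apply Rmult_lt_reg_r with (/ (s * s)). apply Rinv_0_lt_compat; auto. rewrite Rmult_0_l. exact H. }
  field. lra.
Qed.

Lemma ct1_cpt f x : ct1 f x -> continuity_pt f x.
Proof. intros H. apply continuity_pt_filterlim. apply of_ct1. auto. Qed.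

Lemma bound_on f lo hi : lo <= hi -> (forall x, lo <= x <= hi -> ct1 f x) ->
  exists M, 0 <= M /\ forall x, lo <= x <= hi -> Rabs (f x) <= M.
Proof.
  intros Hl Hc. destruct (continuity_ab_maj (fun x => Rabs (f x)) lo hi Hl) as [m [Hm _]].
  intros c Hc'. apply ct1_cpt. intros e He. destruct (Hc c Hc' e He) as [d [Hd H]].
  exists d; split; auto. intros y Hy. eapply Rle_lt_trans. apply Rabs_triang_inv2. auto.
  exists (Rabs (f m)). split. apply Rabs_pos. auto.
Qed.

Definition Gh a (h : R -> R) tau s := h (tau - s * s) * Kf a tau s.
Definition fh a (h : R -> R) tau t := h t / sqrt (a tau ^ 2 - a t ^ 2).

Lemma fh_cont a h : regular_scale_factor a -> even_fun a ->
  forall tau t, 0 < tau -> Rabs t < tau -> ct1 h t -> ct1 (fh a h tau) t.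
Proof.
  intros Ha He tau t Ht Hat Hh. unfold fh.
  apply (ct2_slice (fun _ t => h t / sqrt (a tau ^ 2 - a t ^ 2)) 0 t).
  unfold Rdiv. apply ct2_mult. apply (ct2_comp1 h (fun u v => v)); auto. apply ct2_snd.
  apply ct2_inv. apply ct2_sqrt. apply ct2_minus. apply ct2_const.
  apply (ct2_ext (fun u v => a v * a v)). intros; ring.
  apply ct2_mult; (apply (ct2_comp1 a (fun u v => v)); [apply ct_a; auto| apply ct2_snd]).
  apply Rgt_not_eq, sqrt_lt_R0.
  assert (a t < a tau) by (apply a_lt; auto; rewrite (Rabs_pos_eq tau); lra).
  generalize (a_nonneg a Ha He t); intros. nra.
Qed.

Lemma Gh_cont a h : regular_scale_factor a -> even_fun a ->
  forall tau s, 0 < tau -> s * s < 2 * tau -> ct1 h (tau - s * s) -> ct2 (Gh a h) tau s.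
Proof.
  intros Ha He tau s Ht Hs Hh. unfold Gh. apply ct2_mult.
  apply (ct2_comp1 h (fun u v => u - v * v)); auto.
  apply ct2_minus. apply ct2_fst. apply ct2_mult; apply ct2_snd.
  apply Kf_cont; auto.
Qed.

Lemma subst a h : regular_scale_factor a -> even_fun a ->
  forall tau s1 s2, 0 < tau -> 0 < s1 -> 0 < s2 -> s1 * s1 < 2 * tau -> s2 * s2 < 2 * tau ->
  (forall t, Rmin (tau - s2 * s2) (tau - s1 * s1) <= t <= Rmax (tau - s2 * s2) (tau - s1 * s1) -> ct1 h t) ->
  RInt (Gh a h tau) s1 s2 = RInt (fh a h tau) (tau - s2 * s2) (tau - s1 * s1).
Proof.
  intros Ha He tau s1 s2 Ht H1 H2 H1' H2' Hh.
  assert (Hin : forall s, Rmin s1 s2 <= s <= Rmax s1 s2 ->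
     Rmin (tau - s2 * s2) (tau - s1 * s1) <= tau - s * s <= Rmax (tau - s2 * s2) (tau - s1 * s1)).
  { intros s [Hs1 Hs2]. unfold Rmin, Rmax in *.
    destruct (Rle_dec s1 s2); destruct (Rle_dec (tau - s2 * s2) (tau - s1 * s1)); split; nra. }
  assert (Hc' : forall t, Rmin (tau - s2 * s2) (tau - s1 * s1) <= t <= Rmax (tau - s2 * s2) (tau - s1 * s1) ->
     continuous (fh a h tau) t).
  { intros t Htr. apply of_ct1. apply fh_cont; auto. apply Rabs_def1; unfold Rmin, Rmax in Htr;
    destruct (Rle_dec (tau - s2 * s2) (tau - s1 * s1)); nra. }
  assert (Hc : forall s, Rmin s1 s2 <= s <= Rmax s1 s2 -> continuous (fh a h tau) (tau - s * s)).
  { intros s Hs. apply Hc', Hin; auto. }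
  assert (Hd : forall x, Rmin s1 s2 <= x <= Rmax s1 s2 ->
     is_derive (fun s => tau - s * s) x (- (2 * x)) /\ continuous (fun s => - (2 * s)) x).
  { intros x Hx. split. auto_derive; auto; ring. apply of_ct1. apply (ct2_slice (fun _ s => - (2 * s)) 0 x).
    apply ct2_opp. apply ct2_mult. apply ct2_const. apply ct2_snd. }
  rewrite <- (opp_RInt_swap (fh a h tau)).
  2: { apply (ex_RInt_continuous (V:=R_CompleteNormedModule)). rewrite Rmin_comm, Rmax_comm. auto. }
  rewrite <- (RInt_comp (fh a h tau) (fun s => tau - s * s) (fun s => - (2 * s)) s1 s2); auto.
  rewrite <- RInt_opp.
  2: { eexists. apply (is_RInt_comp _ (fun s => tau - s * s) (fun s => - (2 * s)) s1 s2); auto. }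
  apply RInt_ext. intros x Hx.
  assert (Hx0 : 0 < x /\ x * x < 2 * tau).
  { destruct Hx as [Hx1 Hx2]. unfold Rmin, Rmax in *; destruct (Rle_dec s1 s2); split; nra. }
  unfold Gh, fh. rewrite Kf_eq; try tauto.
  set (y := h (tau - x * x) / sqrt (a tau ^ 2 - a (tau - x * x) ^ 2)).
  change (opp (scal (- (2 * x)) y)) with (- (- (2 * x) * y)). unfold y, Rdiv. match goal with |- ?x = ?y => change (@eq R x y) end; ring.
Qed.

Lemma exRInt_on f lo hi u v : (forall x, lo <= x <= hi -> ct1 f x) ->
  lo <= u <= hi -> lo <= v <= hi -> ex_RInt f u v.
Proof.
  intros Hc Hu Hv. apply (ex_RInt_continuous (V:=R_CompleteNormedModule)). intros z Hz. apply of_ct1, Hc.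
  unfold Rmin, Rmax in Hz; destruct (Rle_dec u v); lra.
Qed.

Lemma RInt_abs_bound f u v M : (forall x, Rmin u v <= x <= Rmax u v -> ct1 f x) ->
  (forall x, Rmin u v <= x <= Rmax u v -> Rabs (f x) <= M) ->
  Rabs (RInt f u v) <= M * Rabs (v - u).
Proof.
  intros Hc Hb. destruct (Rle_or_lt u v) as [H|H].
  - rewrite Rmin_left, Rmax_right in * by lra. rewrite (Rabs_pos_eq (v - u)) by lra. rewrite Rmult_comm.
    apply abs_RInt_le_const; auto. apply (exRInt_on f u v); auto; lra.
  - rewrite Rmin_right, Rmax_left in * by lra.
    rewrite <- (opp_RInt_swap f) by (apply (exRInt_on f v u); auto; lra).
    change (opp (RInt f v u)) with (- RInt f v u). rewrite Rabs_Ropp.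
    rewrite (Rabs_minus_sym v u), (Rabs_pos_eq (u - v)) by lra. rewrite Rmult_comm.
    apply abs_RInt_le_const; auto. lra. apply (exRInt_on f v u); auto; lra.
Qed.

Lemma RInt_diff f lo hi z z' : (forall x, lo <= x <= hi -> ct1 f x) ->
  lo <= z <= hi -> lo <= z' <= hi -> RInt f lo z - RInt f lo z' = RInt f z' z.
Proof.
  intros Hc Hz Hz'. rewrite <- (RInt_Chasles f lo z' z).
  change (plus (RInt f lo z') (RInt f z' z)) with (RInt f lo z' + RInt f z' z). ring.
  apply (exRInt_on f lo hi); auto; lra. apply (exRInt_on f lo hi); auto; lra.
Qed.

Lemma sqrt_diff_bound u v : 0 <= u -> 0 < v -> Rabs (sqrt u - sqrt v) <= Rabs (u - v) / sqrt v.
Proof.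
  intros Hu Hv. assert (Hsv : 0 < sqrt v) by (apply sqrt_lt_R0; auto).
  generalize (sqrt_pos u); intros Hsu.
  assert (E : sqrt u - sqrt v = (u - v) / (sqrt u + sqrt v)).
  { rewrite <- (sqrt_sqrt u) at 2 by lra. rewrite <- (sqrt_sqrt v) at 2 by lra. field. lra. }
  rewrite E. unfold Rdiv. rewrite Rabs_mult. apply Rmult_le_compat_l. apply Rabs_pos.
  rewrite Rabs_pos_eq. apply Rinv_le_contravar; lra. left; apply Rinv_0_lt_compat; lra.
Qed.

Lemma gen_int a h : regular_scale_factor a -> even_fun a ->
  forall tau t0, 0 < tau -> - tau < t0 < tau -> (forall t, t0 <= t <= tau -> ct1 h t) ->
  is_RInt_gen (fh a h tau) (at_right t0) (at_left tau) (RInt (Gh a h tau) 0 (sqrt (tau - t0))).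
Proof.
  intros Ha He tau t0 Ht Ht0 Hh.
  set (S := sqrt (tau - t0)).
  assert (HS : 0 < S) by (apply sqrt_lt_R0; lra).
  assert (HS2 : S * S = tau - t0) by (apply sqrt_sqrt; lra).
  assert (HG : forall s, 0 <= s <= S -> ct1 (Gh a h tau) s).
  { intros s Hs. apply (ct2_slice (Gh a h) tau s). apply Gh_cont; auto. nra. apply Hh. nra. }
  destruct (bound_on (Gh a h tau) 0 S) as [M [HM HMb]]; [lra|auto|].
  assert (Hlip : forall z z', 0 <= z <= S -> 0 <= z' <= S ->
     Rabs (RInt (Gh a h tau) 0 z - RInt (Gh a h tau) 0 z') <= M * Rabs (z - z')).
  { intros z z' Hz Hz'. rewrite (RInt_diff _ 0 S) by auto. apply RInt_abs_bound.
    intros x Hx; apply HG; unfold Rmin, Rmax in Hx; destruct (Rle_dec z' z); lra.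
    intros x Hx; apply HMb; unfold Rmin, Rmax in Hx; destruct (Rle_dec z' z); lra. }
  unfold is_RInt_gen, filterlimi, filter_le, filtermapi. intros P [eps HP].
  set (d1 := eps * S / (2 * (M + 1))).
  set (d2 := (eps / (2 * (M + 1))) ^ 2).
  assert (Hd1 : 0 < d1) by (unfold d1; destruct eps; simpl; apply Rdiv_lt_0_compat; nra).
  assert (Hd2 : 0 < d2) by (unfold d2; destruct eps; apply pow_lt, Rdiv_lt_0_compat; simpl; lra).
  apply Filter_prod with (fun x => t0 < x < t0 + d1 /\ x < tau) (fun y => tau - d2 < y < tau /\ t0 < y).
  - assert (Hp : 0 < Rmin d1 (tau - t0)) by (apply Rmin_pos; lra).
    exists (mkposreal _ Hp). intros y Hy Hy'. apply ball_R in Hy. cbn [pos] in Hy.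
    generalize (Rmin_l d1 (tau - t0)) (Rmin_r d1 (tau - t0)); intros. lra.
  - assert (Hp : 0 < Rmin d2 (tau - t0)) by (apply Rmin_pos; lra).
    exists (mkposreal _ Hp). intros y Hy Hy'. apply ball_R in Hy. cbn [pos] in Hy.
    generalize (Rmin_l d2 (tau - t0)) (Rmin_r d2 (tau - t0)); intros. lra.
  - intros x y [[Hx1 Hx2] Hx3] [[Hy1 Hy2] Hy3]. simpl.
    set (sx := sqrt (tau - x)). set (sy := sqrt (tau - y)).
    assert (Hsx : 0 < sx) by (apply sqrt_lt_R0; lra).
    assert (Hsy : 0 < sy) by (apply sqrt_lt_R0; lra).
    assert (Hsx2 : sx * sx = tau - x) by (apply sqrt_sqrt; lra).
    assert (Hsy2 : sy * sy = tau - y) by (apply sqrt_sqrt; lra).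
    assert (HsxS : sx <= S) by (apply sqrt_le_1_alt; lra).
    assert (HsyS : sy <= S) by (apply sqrt_le_1_alt; lra).
    exists (RInt (Gh a h tau) sy sx). split.
    + rewrite (subst a h Ha He tau sy sx); auto; try nra.
      rewrite Hsx2, Hsy2. replace (tau - (tau - x)) with x by ring. replace (tau - (tau - y)) with y by ring.
      apply (RInt_correct (V:=R_CompleteNormedModule)). apply (ex_RInt_continuous (V:=R_CompleteNormedModule)). intros z Hz. apply of_ct1. apply fh_cont; auto.
      apply Rabs_def1; unfold Rmin, Rmax in Hz; destruct (Rle_dec x y); lra.
      apply Hh; unfold Rmin, Rmax in Hz; destruct (Rle_dec x y); lra.
      intros t Ht'. apply Hh. rewrite Hsx2, Hsy2 in Ht'. unfold Rmin, Rmax in Ht'.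
      destruct (Rle_dec (tau - (tau - x)) (tau - (tau - y))); lra.
    + apply HP. apply ballR. change (Rabs (RInt (Gh a h tau) sy sx - RInt (Gh a h tau) 0 S) < eps).
      rewrite <- (RInt_diff _ 0 S sx sy HG) by lra.
      assert (E1 : Rabs (RInt (Gh a h tau) 0 sx - RInt (Gh a h tau) 0 S) <= M * Rabs (sx - S)) by (apply Hlip; lra).
      assert (E2 : Rabs (RInt (Gh a h tau) 0 sy - RInt (Gh a h tau) 0 0) <= M * Rabs (sy - 0)) by (apply Hlip; lra).
      rewrite RInt_point in E2. change (@zero R_AbsRing) with 0 in E2. rewrite Rminus_0_r in E2, E2.
      rewrite (Rabs_pos_eq sy) in E2 by lra.
      assert (E3 : Rabs (sx - S) <= Rabs ((tau - x) - (tau - t0)) / S) by (apply sqrt_diff_bound; lra).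
      assert (E4 : sy * sy < (eps / (2 * (M + 1))) ^ 2) by (rewrite Hsy2; unfold d2 in Hy1; lra).
      assert (E5 : sy < eps / (2 * (M + 1))).
      { assert (0 < eps / (2 * (M + 1))) by (apply Rdiv_lt_0_compat; [apply cond_pos|lra]).
        simpl in E4. nra. }
      replace (Rabs ((tau - x) - (tau - t0))) with (x - t0) in E3 by (rewrite Rabs_left by lra; ring).
      assert (E6 : M * Rabs (sx - S) <= M * ((x - t0) / S)) by (apply Rmult_le_compat_l; auto).
      assert (E7 : M * ((x - t0) / S) < eps / 2).
      { unfold d1 in Hx2. destruct eps as [e He']; simpl in *.
        apply Rle_lt_trans with ((M + 1) * ((x - t0) / S)). apply Rmult_le_compat_r.
        apply Rmult_le_pos; [lra| left; apply Rinv_0_lt_compat; lra]. lra.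
        replace ((M + 1) * ((x - t0) / S)) with ((x - t0) * ((M + 1) / S)) by (field; lra).
        apply Rlt_le_trans with (e * S / (2 * (M + 1)) * ((M + 1) / S)).
        apply Rmult_lt_compat_r. apply Rdiv_lt_0_compat; lra. lra. right; field; lra. }
      assert (E8 : M * sy <= eps / 2).
      { destruct eps as [e He']; simpl in *.
        apply Rle_trans with ((M + 1) * (e / (2 * (M + 1)))). apply Rmult_le_compat; lra.
        right; field; lra. }
      replace (RInt (Gh a h tau) 0 sx - RInt (Gh a h tau) 0 sy - RInt (Gh a h tau) 0 S)
        with ((RInt (Gh a h tau) 0 sx - RInt (Gh a h tau) 0 S) - RInt (Gh a h tau) 0 sy) by ring.
      eapply Rle_lt_trans. apply Rabs_triang. rewrite Rabs_Ropp. lra.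
Qed.

Lemma rho_eq a : regular_scale_factor a -> even_fun a ->
  forall tau t0, 0 < tau -> - tau < t0 < tau -> rho_of a tau t0 = RInt (Gh a a tau) 0 (sqrt (tau - t0)).
Proof.
  intros Ha He tau t0 Ht Ht0. unfold rho_of, imp_int.
  apply (is_RInt_gen_unique (fh a a tau)).
  apply gen_int; auto. intros; apply ct_a; auto.
Qed.

Lemma chi_eq a : regular_scale_factor a -> even_fun a ->
  forall tau s, 0 < s < tau ->
  chi a s tau = RInt (Gh a (fun t => a tau / a t) tau) 0 (sqrt (tau - s)).
Proof.
  intros Ha He tau s Hs. unfold chi, imp_int.
  replace (fun t => / a t * (a tau / sqrt (a tau ^ 2 - a t ^ 2))) with (fh a (fun t => a tau / a t) tau).
  2: { apply functional_extensionality; intros t; unfold fh, Rdiv; ring. }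
  apply (is_RInt_gen_unique (fh a (fun t => a tau / a t) tau)).
  apply gen_int; auto. lra. lra.
  intros t Ht. apply (ct2_slice (fun _ t => a tau / a t) 0 t). unfold Rdiv. apply ct2_mult. apply ct2_const.
  apply ct2_inv. apply (ct2_comp1 a (fun u v => v)). apply ct_a; auto. apply ct2_snd.
  apply Rgt_not_eq, a_pos; auto; lra.
Qed.

Lemma unif_near G x lo hi : lo <= hi -> (forall s, lo <= s <= hi -> ct2 G x s) ->
  forall eps, 0 < eps -> exists d, 0 < d /\ forall u s, Rabs (u - x) < d -> lo <= s <= hi ->
    Rabs (G u s - G x s) < eps.
Proof.
  intros Hlh Hc eps Heps.
  assert (Hex : forall t, exists d : posreal, lo <= t <= hi -> forall u v, Rabs (u - x) < d -> Rabs (v - t) < d ->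
     Rabs (G u v - G x t) < eps / 2).
  { intros t. destruct (Rle_dec lo t) as [H1|H1]; [destruct (Rle_dec t hi) as [H2|H2]|].
    - destruct (Hc t (conj H1 H2) (eps / 2)) as [d [Hd H]]. lra. exists (mkposreal _ Hd). intros _. auto.
    - exists (mkposreal _ Rlt_0_1). intros; lra.
    - exists (mkposreal _ Rlt_0_1). intros; lra. }
  set (delta := fun t => proj1_sig (constructive_indefinite_description _ (Hex t))).
  assert (Hdelta : forall t, lo <= t <= hi -> forall u v, Rabs (u - x) < delta t -> Rabs (v - t) < delta t ->
     Rabs (G u v - G x t) < eps / 2).
  { intros t. unfold delta. destruct (constructive_indefinite_description _ (Hex t)) as [d Hd]. simpl. auto. }
  destruct (compactness_value_1d lo hi delta) as [d0 Hd0].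
  exists d0. split. apply cond_pos. intros u s Hu Hs.
  apply NNPP. intro C. apply (Hd0 s Hs). intros [t [Ht [Hst Hdt]]].
  apply C. 
  assert (A1 : Rabs (G u s - G x t) < eps / 2) by (apply Hdelta; auto; lra).
  assert (A2 : Rabs (G x s - G x t) < eps / 2) by (apply Hdelta; auto; rewrite Rminus_eq_0, Rabs_R0; apply cond_pos).
  replace (G u s - G x s) with ((G u s - G x t) - (G x s - G x t)) by ring.
  eapply Rle_lt_trans. apply Rabs_triang. rewrite Rabs_Ropp. lra.
Qed.

Lemma param_cont G x X : 0 <= X ->
  (exists d0, 0 < d0 /\ forall u s, Rabs (u - x) < d0 -> 0 <= s <= X + d0 -> ct2 G u s) ->
  forall eps, 0 < eps -> exists d, 0 < d /\ forall u z, Rabs (u - x) < d -> 0 <= z -> Rabs (z - X) < d ->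
    Rabs (RInt (G u) 0 z - RInt (G x) 0 X) < eps.
Proof.
  intros HX [d0 [Hd0 Hc]] eps Heps.
  set (hi := X + d0 / 2).
  assert (Hcx : forall s, 0 <= s <= hi -> ct2 G x s) by (intros s Hs; apply Hc; [rewrite Rminus_eq_0, Rabs_R0; auto| unfold hi in Hs; lra]).
  destruct (unif_near G x 0 hi) with (eps := eps / (2 * (hi + 1))) as [d1 [Hd1 Hu]]; auto.
  unfold hi; lra. apply Rdiv_lt_0_compat; unfold hi; lra.
  destruct (bound_on (G x) 0 hi) as [M [HM HMb]]. unfold hi; lra.
  intros s Hs. apply ct2_slice, Hcx; auto.
  set (d := Rmin (Rmin d1 (d0 / 2)) (eps / (2 * (M + 1)))).
  assert (Hd : 0 < d) by (unfold d; repeat apply Rmin_pos; try lra; apply Rdiv_lt_0_compat; lra).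
  assert (Hdd : d <= d1 /\ d <= d0 / 2 /\ d <= eps / (2 * (M + 1))).
  { unfold d. generalize (Rmin_l (Rmin d1 (d0 / 2)) (eps / (2 * (M + 1))))
      (Rmin_r (Rmin d1 (d0 / 2)) (eps / (2 * (M + 1)))) (Rmin_l d1 (d0 / 2)) (Rmin_r d1 (d0 / 2)). lra. }
  exists d; split; auto. intros u z Hux Hz HzX.
  apply Rabs_def2 in HzX.
  assert (Hzh : z <= hi) by (unfold hi; lra).
  assert (Hcu : forall s, 0 <= s <= hi -> ct2 G u s) by (intros s Hs; apply Hc; [lra| unfold hi in Hs; lra]).
  assert (E1 : Rabs (RInt (G u) 0 z - RInt (G x) 0 z) <= eps / (2 * (hi + 1)) * Rabs (z - 0)).
  { rewrite <- (RInt_minus (V := R_CompleteNormedModule)).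
    change (fun y => minus (G u y) (G x y)) with (fun y => G u y - G x y).
    apply RInt_abs_bound.
    intros s Hs. rewrite Rmin_left, Rmax_right in Hs by lra.
    apply (ct2_slice (fun _ s => G u s - G x s) 0 s). apply ct2_minus.
    apply (ct2_ext (fun _ v => G u v)); auto. apply (ct2_comp1 (G u) (fun _ v => v)). apply ct2_slice, Hcu; lra. apply ct2_snd.
    apply (ct2_ext (fun _ v => G x v)); auto. apply (ct2_comp1 (G x) (fun _ v => v)). apply ct2_slice, Hcx; lra. apply ct2_snd.
    intros s Hs. rewrite Rmin_left, Rmax_right in Hs by lra. left; apply Hu; auto. lra. lra.
    apply (exRInt_on _ 0 hi); try lra. intros s Hs; apply ct2_slice, Hcu; auto.
    apply (exRInt_on _ 0 hi); try lra. intros s Hs; apply ct2_slice, Hcx; auto. }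
  assert (E2 : Rabs (RInt (G x) 0 z - RInt (G x) 0 X) <= M * Rabs (z - X)).
  { rewrite (RInt_diff _ 0 hi); try (unfold hi; lra). apply RInt_abs_bound.
    intros s Hs; apply ct2_slice, Hcx; unfold Rmin, Rmax in Hs; destruct (Rle_dec X z); unfold hi in *; lra.
    intros s Hs; apply HMb; unfold Rmin, Rmax in Hs; destruct (Rle_dec X z); unfold hi in *; lra.
    intros s Hs; apply ct2_slice, Hcx; auto. }
  rewrite Rminus_0_r, (Rabs_pos_eq z) in E1 by lra.
  assert (E3 : eps / (2 * (hi + 1)) * z < eps / 2).
  { apply Rle_lt_trans with (eps / (2 * (hi + 1)) * hi). apply Rmult_le_compat_l; [|lra].
    left; apply Rdiv_lt_0_compat; unfold hi; lra.
    replace (eps / (2 * (hi + 1)) * hi) with (eps / 2 * (hi / (hi + 1))) by (field; unfold hi; lra).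
    assert (hi / (hi + 1) < 1) by (apply (Rmult_lt_reg_r (hi + 1)); [unfold hi; lra| field_simplify; unfold hi; lra]).
    nra. }
  assert (E4 : M * Rabs (z - X) <= eps / 2).
  { apply Rle_trans with ((M + 1) * (eps / (2 * (M + 1)))).
    apply Rmult_le_compat; try lra. apply Rabs_pos. apply Rabs_le; lra. right; field; lra. }
  replace (RInt (G u) 0 z - RInt (G x) 0 X) with ((RInt (G u) 0 z - RInt (G x) 0 z) + (RInt (G x) 0 z - RInt (G x) 0 X)) by ring.
  eapply Rle_lt_trans. apply Rabs_triang. lra.
Qed.

Lemma ct1_comp f g x : ct1 f (g x) -> ct1 g x -> ct1 (fun y => f (g y)) x.
Proof.
  intros Hf Hg e He. destruct (Hf e He) as [d1 [Hd1 H1]]. destruct (Hg d1 Hd1) as [d2 [Hd2 H2]].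
  exists d2; split; auto.
Qed.

Lemma choose_d0 k tau X : 0 < k -> 0 < tau -> 0 <= X -> X * X < k * tau ->
  exists d0, 0 < d0 /\ forall u s, Rabs (u - tau) < d0 -> 0 <= s <= X + d0 -> 0 < u /\ s * s < k * u.
Proof.
  intros Hk Ht HX HXX. set (c := k * tau - X * X).
  set (d0 := Rmin 1 (Rmin (tau / 2) (c / (2 * X + 2 + k)))).
  assert (Hc : 0 < c) by (unfold c; lra).
  assert (Hq : 0 < c / (2 * X + 2 + k)) by (apply Rdiv_lt_0_compat; lra).
  assert (Hd : d0 <= 1 /\ d0 <= tau / 2 /\ d0 <= c / (2 * X + 2 + k)).
  { unfold d0. generalize (Rmin_l 1 (Rmin (tau / 2) (c / (2 * X + 2 + k))))
      (Rmin_r 1 (Rmin (tau / 2) (c / (2 * X + 2 + k))))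
      (Rmin_l (tau / 2) (c / (2 * X + 2 + k))) (Rmin_r (tau / 2) (c / (2 * X + 2 + k))). lra. }
  assert (Hd0 : 0 < d0) by (unfold d0; repeat apply Rmin_pos; lra).
  exists d0; split; auto. intros u s Hu Hs. apply Rabs_def2 in Hu. split. lra.
  assert (H1 : d0 * (2 * X + 2 + k) <= c).
  { destruct Hd as (_&_&H). apply (Rmult_le_compat_r (2 * X + 2 + k)) in H; [|lra].
    replace (c / (2 * X + 2 + k) * (2 * X + 2 + k)) with c in H by (field; lra). lra. }
  assert (s * s <= (X + d0) * (X + d0)) by (apply Rmult_le_compat; lra).
  assert (d0 * d0 <= d0) by nra.
  assert (k * u > k * tau - k * d0) by nra.
  unfold c in H1. nra.
Qed.

Lemma RInt_pos f lo hi p q : lo <= p -> p < q -> q <= hi ->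
  (forall x, lo <= x <= hi -> ct1 f x) -> (forall x, lo <= x <= hi -> 0 <= f x) ->
  (forall x, p <= x <= q -> 0 < f x) -> 0 < RInt f lo hi.
Proof.
  intros H1 H2 H3 Hc Hn Hp.
  destruct (continuity_ab_min f p q) as [m [Hm Hmr]]. lra. intros c Hc'. apply ct1_cpt, Hc; lra.
  assert (Hfm : 0 < f m) by (apply Hp; auto).
  assert (E : RInt f lo hi = RInt f lo p + RInt f p q + RInt f q hi).
  { assert (X : forall u v, lo <= u <= hi -> lo <= v <= hi -> ex_RInt f u v) by (intros; apply (exRInt_on f lo hi); auto).
    rewrite <- (RInt_Chasles f lo p hi) by (apply X; lra).
    rewrite <- (RInt_Chasles f p q hi) by (apply X; lra).
    change (RInt f lo p + (RInt f p q + RInt f q hi) = RInt f lo p + RInt f p q + RInt f q hi). ring. }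
  rewrite E.
  assert (0 <= RInt f lo p) by (apply RInt_ge_0; auto; [apply (exRInt_on f lo hi); auto; lra| intros; apply Hn; lra]).
  assert (0 <= RInt f q hi) by (apply RInt_ge_0; auto; [apply (exRInt_on f lo hi); auto; lra| intros; apply Hn; lra]).
  assert ((q - p) * f m <= RInt f p q).
  { replace ((q - p) * f m) with (RInt (fun _ => f m) p q).
    apply RInt_le. lra. apply (ex_RInt_const (V:=R_CompleteNormedModule)). apply (exRInt_on f lo hi); auto; lra.
    intros x Hx. apply Hm; lra.
    rewrite RInt_const. reflexivity. }
  assert (0 < (q - p) * f m) by (apply Rmult_lt_0_compat; lra). lra.
Qed.

Definition Rf a tau t : R := RInt (Gh a a tau) 0 (sqrt (tau - t)).

Lemma Ga_nonneg a : regular_scale_factor a -> even_fun a ->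
  forall tau s, 0 < tau -> s * s < 2 * tau -> 0 <= Gh a a tau s.
Proof. intros. unfold Gh. apply Rmult_le_pos. apply a_nonneg; auto. left; apply Kf_pos; auto. Qed.

Lemma Ga_pos a : regular_scale_factor a -> even_fun a ->
  forall tau s, 0 < tau -> s * s < 2 * tau -> s * s <> tau -> 0 < Gh a a tau s.
Proof. intros. unfold Gh. apply Rmult_lt_0_compat. apply a_pos; auto. lra. apply Kf_pos; auto. Qed.

Lemma Ga_ct2 a : regular_scale_factor a -> even_fun a ->
  forall tau s, 0 < tau -> s * s < 2 * tau -> ct2 (Gh a a) tau s.
Proof. intros. apply Gh_cont; auto. apply ct_a; auto. Qed.

Lemma Rf_cont a : regular_scale_factor a -> even_fun a ->
  forall ts t0, 0 < ts -> - ts < t0 <= ts ->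
  forall eps, 0 < eps -> exists d, 0 < d /\ forall tau t, Rabs (tau - ts) < d -> Rabs (t - t0) < d ->
    Rabs (Rf a tau t - Rf a ts t0) < eps.
Proof.
  intros Ha He ts t0 Hts Ht0 eps Heps.
  set (X := sqrt (ts - t0)).
  assert (HX : 0 <= X) by apply sqrt_pos.
  assert (HXX : X * X = ts - t0) by (apply sqrt_sqrt; lra).
  destruct (choose_d0 2 ts X) as [d0 [Hd0 Hreg]]; try lra.
  destruct (param_cont (Gh a a) ts X HX) with (eps := eps) as [d [Hd Hpc]]; auto.
  exists d0; split; auto. intros u s Hu Hs. destruct (Hreg u s Hu Hs). apply Ga_ct2; auto.
  destruct (ct1_of _ _ (continuous_sqrt (ts - t0)) d Hd) as [d' [Hd' Hsq]].
  exists (Rmin d (d' / 2)); split. apply Rmin_pos; lra.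
  intros tau t Htau Ht. generalize (Rmin_l d (d' / 2)) (Rmin_r d (d' / 2)); intros.
  unfold Rf. apply Hpc. lra. apply sqrt_pos. apply Hsq.
  replace (tau - t - (ts - t0)) with ((tau - ts) - (t - t0)) by ring.
  eapply Rle_lt_trans. apply Rabs_triang. rewrite Rabs_Ropp. lra.
Qed.

Lemma Rf_decr a : regular_scale_factor a -> even_fun a ->
  forall tau t1 t2, 0 < tau -> - tau < t1 -> t1 < t2 -> t2 < tau -> Rf a tau t2 < Rf a tau t1.
Proof.
  intros Ha He tau t1 t2 Ht H1 H12 H2.
  set (lo := sqrt (tau - t2)). set (hi := sqrt (tau - t1)).
  assert (Hlo : 0 < lo) by (apply sqrt_lt_R0; lra).
  assert (Hlh : lo < hi) by (apply sqrt_lt_1_alt; lra).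
  assert (Hhi2 : hi * hi = tau - t1) by (apply sqrt_sqrt; lra).
  assert (Hreg : forall s, 0 <= s <= hi -> s * s < 2 * tau) by (intros; nra).
  assert (Hc : forall s, 0 <= s <= hi -> ct1 (Gh a a tau) s) by (intros; apply ct2_slice, Ga_ct2; auto; apply Hreg; auto).
  assert (E : Rf a tau t1 - Rf a tau t2 = RInt (Gh a a tau) lo hi) by (unfold Rf; apply (RInt_diff _ 0 hi); auto; lra).
  assert (0 < RInt (Gh a a tau) lo hi); [|lra].
  set (L := hi - lo).
  destruct (classic (exists x0, lo + L / 8 <= x0 <= lo + 3 * L / 8 /\ x0 * x0 = tau)) as [[x0 [Hx0 Hx0']]|Hn].
  - apply (RInt_pos _ lo hi (lo + 5 * L / 8) (lo + 7 * L / 8)); unfold L; try lra.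
    intros x Hx; apply Hc; lra. intros x Hx; apply Ga_nonneg; auto; apply Hreg; lra.
    intros x Hx. apply Ga_pos; auto. apply Hreg; lra. unfold L in Hx0. intro C. nra.
  - apply (RInt_pos _ lo hi (lo + L / 8) (lo + 3 * L / 8)); unfold L; try lra.
    intros x Hx; apply Hc; lra. intros x Hx; apply Ga_nonneg; auto; apply Hreg; lra.
    intros x Hx. apply Ga_pos; auto. apply Hreg; lra. intro C. apply Hn. exists x; split; auto.
Qed.

Lemma Rf_inj a : regular_scale_factor a -> even_fun a ->
  forall tau t1 t2, 0 < tau -> - tau < t1 < tau -> - tau < t2 < tau -> Rf a tau t1 = Rf a tau t2 -> t1 = t2.
Proof.
  intros Ha He tau t1 t2 Ht H1 H2 E. destruct (Rtotal_order t1 t2) as [L|[L|L]]; auto.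
  generalize (Rf_decr a Ha He tau t1 t2 Ht); lra.
  generalize (Rf_decr a Ha He tau t2 t1 Ht); lra.
Qed.

Lemma Rf_sym a : regular_scale_factor a -> even_fun a ->
  forall tau t, 0 < tau -> 0 <= t < tau -> Rf a tau (- t) = 2 * Rf a tau 0 - Rf a tau t.
Proof.
  intros Ha He tau t Ht [Ht0 Ht1].
  destruct (Req_dec t 0) as [->|Hnz]. rewrite Ropp_0. change (Rf a tau 0 = 2 * Rf a tau 0 - Rf a tau 0). ring.
  assert (Htp : 0 < t) by lra.
  set (S0 := sqrt tau). set (Sp := sqrt (tau + t)). set (Sm := sqrt (tau - t)).
  assert (HS0 : 0 < S0) by (apply sqrt_lt_R0; lra).
  assert (HSm : 0 < Sm) by (apply sqrt_lt_R0; lra).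
  assert (HSp : 0 < Sp) by (apply sqrt_lt_R0; lra).
  assert (E0 : S0 * S0 = tau) by (apply sqrt_sqrt; lra).
  assert (Ep : Sp * Sp = tau + t) by (apply sqrt_sqrt; lra).
  assert (Em : Sm * Sm = tau - t) by (apply sqrt_sqrt; lra).
  assert (Hs0p : S0 <= Sp) by (apply sqrt_le_1_alt; lra).
  assert (Hsm0 : Sm <= S0) by (apply sqrt_le_1_alt; lra).
  assert (Hc : forall s, 0 <= s <= Sp -> ct1 (Gh a a tau) s) by
    (intros; apply ct2_slice, Ga_ct2; auto; nra).
  assert (A : Rf a tau (- t) - Rf a tau 0 = RInt (fh a a tau) (- t) 0).
  { unfold Rf. replace (tau - - t) with (tau + t) by ring. replace (tau - 0) with tau by ring.
    fold Sp S0. rewrite (RInt_diff _ 0 Sp) by (auto; lra).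
    rewrite (subst a a Ha He tau S0 Sp); auto; try lra. rewrite E0, Ep.
    f_equal; ring. intros; apply ct_a; auto. }
  assert (B : Rf a tau 0 - Rf a tau t = RInt (fh a a tau) 0 t).
  { unfold Rf. replace (tau - 0) with tau by ring.
    fold Sm S0. rewrite (RInt_diff _ 0 Sp) by (auto; lra).
    rewrite (subst a a Ha He tau Sm S0); auto; try lra. rewrite E0, Em.
    f_equal; ring. intros; apply ct_a; auto. }
  assert (Hfc : forall x, - t <= x <= t -> ct1 (fh a a tau) x) by
    (intros; apply fh_cont; auto; [apply Rabs_def1; lra| apply ct_a; auto]).
  assert (Hex1 : ex_RInt (fh a a tau) 0 t) by (apply (exRInt_on _ (- t) t); auto; lra).
  assert (Hex2 : ex_RInt (fh a a tau) (- t) 0) by (apply (exRInt_on _ (- t) t); auto; lra).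
  assert (L := RInt_comp_lin (V:=R_CompleteNormedModule) (fh a a tau) (-1) 0 0 t).
  assert (L2 : @eq R (RInt (fun y => scal (-1) (fh a a tau (-1 * y + 0))) 0 t) (- RInt (fh a a tau) 0 t)).
  { rewrite <- (RInt_opp (V:=R_CompleteNormedModule)) by auto. apply RInt_ext. intros x _.
    replace (-1 * x + 0) with (- x) by ring. unfold fh. rewrite He.
    change (-1 * (a x / sqrt (a tau ^ 2 - a x ^ 2)) = - (a x / sqrt (a tau ^ 2 - a x ^ 2))). ring. }
  assert (L3 : @eq R (RInt (fh a a tau) (-1 * 0 + 0) (-1 * t + 0)) (- RInt (fh a a tau) (- t) 0)).
  { replace (-1 * 0 + 0) with 0 by ring. replace (-1 * t + 0) with (- t) by ring.
    rewrite <- (opp_RInt_swap (V:=R_CompleteNormedModule) (fh a a tau) (- t) 0) by auto. reflexivity. }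
  assert (C : @eq R (RInt (fh a a tau) (- t) 0) (RInt (fh a a tau) 0 t)).
  { assert (@eq R (- RInt (fh a a tau) 0 t) (- RInt (fh a a tau) (- t) 0)) by (rewrite <- L2, <- L3; apply L; replace (-1 * 0 + 0) with 0 by ring; replace (-1 * t + 0) with (- t) by ring; apply (exRInt_on _ (- t) t); auto; lra). lra. }
  lra.
Qed.

Lemma Rf_tau a tau : Rf a tau tau = 0.
Proof. unfold Rf. rewrite Rminus_eq_0, sqrt_0. apply (RInt_point (V:=R_CompleteNormedModule)). Qed.

Lemma Rf_small a : regular_scale_factor a -> even_fun a ->
  forall tau eps, 0 < tau -> 0 < eps -> exists t, 0 <= t < tau /\ Rf a tau t < eps.
Proof.
  intros Ha He tau eps Ht He0. destruct (Rf_cont a Ha He tau tau Ht) with (eps := eps) as [d [Hd H]]; auto. lra.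
  exists (tau - Rmin d tau / 2). generalize (Rmin_l d tau) (Rmin_r d tau) (Rmin_pos d tau Hd Ht); intros.
  split. lra. specialize (H tau (tau - Rmin d tau / 2)). rewrite Rf_tau, Rminus_0_r in H.
  apply Rabs_def2 in H. lra. rewrite Rminus_eq_0, Rabs_R0; auto.
  rewrite Rabs_left by lra. lra.
Qed.

Lemma clamp_lip lo hi y z : lo <= hi ->
  Rabs (Rmax lo (Rmin z hi) - Rmax lo (Rmin y hi)) <= Rabs (z - y).
Proof.
  intros H. generalize (Rle_abs (z - y)) (Rle_abs (- (z - y))); rewrite Rabs_Ropp; intros.
  unfold Rmax, Rmin; repeat destruct Rle_dec; apply Rabs_le; lra.
Qed.

Lemma Rf_exists a : regular_scale_factor a -> even_fun a ->
  forall tau rho, 0 < tau -> 0 < rho < 2 * Rf a tau 0 -> exists t, - tau < t < tau /\ Rf a tau t = rho.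
Proof.
  intros Ha He tau rho Ht Hr.
  destruct (Rf_small a Ha He tau (Rmin rho (2 * Rf a tau 0 - rho))) as [t2 [Ht2 Hs]]; auto.
  apply Rmin_pos; lra.
  generalize (Rmin_l rho (2 * Rf a tau 0 - rho)) (Rmin_r rho (2 * Rf a tau 0 - rho)); intros.
  assert (Hsym := Rf_sym a Ha He tau t2 Ht Ht2).
  set (g := fun y => Rf a tau (Rmax (- t2) (Rmin y t2))).
  assert (Hg : forall y, ct1 g y).
  { intros y. unfold g. apply (ct1_comp (Rf a tau) (fun y => Rmax (- t2) (Rmin y t2))).
    - set (c := Rmax (- t2) (Rmin y t2)).
      assert (Hc : - t2 <= c <= t2) by (unfold c, Rmax, Rmin; repeat destruct Rle_dec; lra).
      intros e He0. destruct (Rf_cont a Ha He tau c Ht) with (eps := e) as [d [Hd Hq]]; auto. lra.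
      exists d; split; auto. intros z Hz. apply Hq; auto. rewrite Rminus_eq_0, Rabs_R0; auto.
    - intros e He0. exists e; split; auto. intros z Hz. eapply Rle_lt_trans. apply clamp_lip. lra. auto. }
  assert (Eg1 : g (- t2) = Rf a tau (- t2)) by (unfold g; f_equal; unfold Rmax, Rmin; repeat destruct Rle_dec; lra).
  assert (Eg2 : g t2 = Rf a tau t2) by (unfold g; f_equal; unfold Rmax, Rmin; repeat destruct Rle_dec; lra).
  destruct (IVT_gen g (- t2) t2 rho) as [x [Hx Hgx]].
  intros y. apply ct1_cpt, Hg.
  rewrite Eg1, Eg2, Rmin_right, Rmax_left; lra.
  rewrite Rmin_left, Rmax_right in Hx by lra.
  exists x. split. lra. rewrite <- Hgx. unfold g. f_equal. unfold Rmax, Rmin; repeat destruct Rle_dec; lra.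
Qed.

Lemma rhoM_eq a : regular_scale_factor a -> even_fun a -> forall tau, 0 < tau -> rhoM a tau = Rf a tau 0.
Proof. intros Ha He tau Ht. unfold rhoM. rewrite rho_eq; auto. lra. Qed.

Lemma t0f_spec a : regular_scale_factor a -> even_fun a ->
  forall tau rho, 0 < tau -> 0 < rho < 2 * rhoM a tau ->
  - tau < t0f a tau rho < tau /\ Rf a tau (t0f a tau rho) = rho.
Proof.
  intros Ha He tau rho Ht Hr. rewrite rhoM_eq in Hr by auto.
  assert (H : - tau < t0f a tau rho < tau /\ rho = rho_of a tau (t0f a tau rho)).
  { unfold t0f. apply epsilon_spec. destruct (Rf_exists a Ha He tau rho Ht Hr) as [t [Ht1 Ht2]].
    exists t. split; auto. rewrite rho_eq; auto. }
  destruct H as [H1 H2]. split; auto. unfold Rf. rewrite <- rho_eq; auto.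
Qed.

Lemma t0f_cont a : regular_scale_factor a -> even_fun a ->
  forall taus rhos, 0 < taus -> 0 < rhos < 2 * rhoM a taus ->
  forall eps, 0 < eps -> exists d, 0 < d /\ forall tau rho, Rabs (tau - taus) < d -> Rabs (rho - rhos) < d ->
    0 < tau -> 0 < rho < 2 * rhoM a tau -> Rabs (t0f a tau rho - t0f a taus rhos) < eps.
Proof.
  intros Ha He taus rhos Hts Hrs eps Heps.
  destruct (t0f_spec a Ha He taus rhos Hts Hrs) as [Hb Hv].
  set (ts := t0f a taus rhos) in *.
  set (e := Rmin eps (Rmin ((taus - ts) / 2) ((ts + taus) / 2))).
  assert (He1 : e <= eps /\ e <= (taus - ts) / 2 /\ e <= (ts + taus) / 2).
  { unfold e. generalize (Rmin_l eps (Rmin ((taus - ts) / 2) ((ts + taus) / 2)))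
     (Rmin_r eps (Rmin ((taus - ts) / 2) ((ts + taus) / 2)))
     (Rmin_l ((taus - ts) / 2) ((ts + taus) / 2)) (Rmin_r ((taus - ts) / 2) ((ts + taus) / 2)). lra. }
  assert (He0 : 0 < e) by (unfold e; repeat apply Rmin_pos; lra).
  assert (D1 : Rf a taus (ts + e) < rhos) by (rewrite <- Hv; apply Rf_decr; auto; lra).
  assert (D2 : rhos < Rf a taus (ts - e)) by (rewrite <- Hv; apply Rf_decr; auto; lra).
  set (g := Rmin (Rf a taus (ts - e) - rhos) (rhos - Rf a taus (ts + e))).
  assert (Hg : 0 < g /\ g <= Rf a taus (ts - e) - rhos /\ g <= rhos - Rf a taus (ts + e)).
  { unfold g. split. apply Rmin_pos; lra. split; [apply Rmin_l|apply Rmin_r]. }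
  destruct (Rf_cont a Ha He taus (ts - e) Hts) with (eps := g / 2) as [d1 [Hd1 H1]]; [lra|lra|].
  destruct (Rf_cont a Ha He taus (ts + e) Hts) with (eps := g / 2) as [d2 [Hd2 H2]]; [lra|lra|].
  set (d := Rmin (Rmin d1 d2) (Rmin (e / 2) (g / 2))).
  assert (Hd : d <= d1 /\ d <= d2 /\ d <= e / 2 /\ d <= g / 2).
  { unfold d. generalize (Rmin_l (Rmin d1 d2) (Rmin (e / 2) (g / 2))) (Rmin_r (Rmin d1 d2) (Rmin (e / 2) (g / 2)))
      (Rmin_l d1 d2) (Rmin_r d1 d2) (Rmin_l (e / 2) (g / 2)) (Rmin_r (e / 2) (g / 2)). lra. }
  exists d. split. unfold d; repeat apply Rmin_pos; lra.
  intros tau rho Htau Hrho Ht0 Hr0.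
  destruct (t0f_spec a Ha He tau rho Ht0 Hr0) as [Hb' Hv'].
  set (t := t0f a tau rho) in *.
  assert (A1 : Rabs (Rf a tau (ts - e) - Rf a taus (ts - e)) < g / 2) by (apply H1; [lra| rewrite Rminus_eq_0, Rabs_R0; lra]).
  assert (A2 : Rabs (Rf a tau (ts + e) - Rf a taus (ts + e)) < g / 2) by (apply H2; [lra| rewrite Rminus_eq_0, Rabs_R0; lra]).
  apply Rabs_def2 in A1. apply Rabs_def2 in A2. apply Rabs_def2 in Htau. apply Rabs_def2 in Hrho.
  assert (L1 : ts - e < t).
  { destruct (Rlt_or_le (ts - e) t) as [L|L]; auto. exfalso. destruct L as [L|L].
    - assert (Rf a tau (ts - e) < Rf a tau t) by (apply Rf_decr; auto; lra). lra.
    - assert (Rf a tau t = Rf a tau (ts - e)) by (rewrite L; reflexivity). lra. }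
  assert (L2 : t < ts + e).
  { destruct (Rlt_or_le t (ts + e)) as [L|L]; auto. exfalso. destruct L as [L|L].
    - assert (Rf a tau t < Rf a tau (ts + e)) by (apply Rf_decr; auto; lra). lra.
    - assert (Rf a tau t = Rf a tau (ts + e)) by (rewrite L; reflexivity). lra. }
  apply Rabs_def1; lra.
Qed.

Lemma Gchi_ct2 a : regular_scale_factor a -> even_fun a ->
  forall tau s, 0 < tau -> s * s < tau -> ct2 (Gchi a) tau s.
Proof.
  intros Ha He tau s Ht Hs. unfold Gchi, Rdiv. apply ct2_mult. apply ct2_mult.
  apply (ct2_comp1 a (fun u v => u)). apply ct_a; auto. apply ct2_fst.
  apply ct2_inv. apply (ct2_comp1 a (fun u v => u - v * v)). apply ct_a; auto.
  apply ct2_minus. apply ct2_fst. apply ct2_mult; apply ct2_snd.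
  apply Rgt_not_eq, a_pos; auto; lra.
  apply Kf_cont; auto. nra.
Qed.

Lemma Gchi_nonneg a : regular_scale_factor a -> even_fun a ->
  forall tau s, 0 < tau -> s * s < tau -> 0 <= Gchi a tau s.
Proof.
  intros Ha He tau s Ht Hs. unfold Gchi. apply Rmult_le_pos.
  unfold Rdiv. apply Rmult_le_pos. apply a_nonneg; auto. left; apply Rinv_0_lt_compat, a_pos; auto; lra.
  left; apply Kf_pos; auto; nra.
Qed.

Definition Cf a tau t : R := RInt (Gchi a tau) 0 (sqrt (tau - Rabs t)).
Definition Phi a tau t : R := if Req_EM_T t 0 then 0 else a t ^ 2 * Cf a tau t ^ 2.

Lemma Cf_ct2 a : regular_scale_factor a -> even_fun a ->
  forall ts t0, 0 < ts -> 0 < Rabs t0 < ts -> ct2 (Cf a) ts t0.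
Proof.
  intros Ha He ts t0 Hts Ht0 eps Heps.
  set (X := sqrt (ts - Rabs t0)).
  assert (HX : 0 <= X) by apply sqrt_pos.
  assert (HXX : X * X = ts - Rabs t0) by (apply sqrt_sqrt; lra).
  destruct (choose_d0 1 ts X) as [d0 [Hd0 Hreg]]; try lra.
  destruct (param_cont (Gchi a) ts X HX) with (eps := eps) as [d [Hd Hpc]]; auto.
  exists d0; split; auto. intros u s Hu Hs. destruct (Hreg u s Hu Hs). apply Gchi_ct2; auto. lra.
  destruct (ct1_of _ _ (continuous_sqrt (ts - Rabs t0)) d Hd) as [d' [Hd' Hsq]].
  exists (Rmin d (d' / 2)); split. apply Rmin_pos; lra.
  intros tau t Htau Ht. generalize (Rmin_l d (d' / 2)) (Rmin_r d (d' / 2)); intros.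
  unfold Cf. apply Hpc. lra. apply sqrt_pos. apply Hsq.
  replace (tau - Rabs t - (ts - Rabs t0)) with ((tau - ts) - (Rabs t - Rabs t0)) by ring.
  eapply Rle_lt_trans. apply Rabs_triang. rewrite Rabs_Ropp.
  generalize (Rabs_triang_inv2 t t0). lra.
Qed.

Lemma Phi_ct_nz a : regular_scale_factor a -> even_fun a ->
  forall ts t0, 0 < ts -> 0 < Rabs t0 < ts -> ct2 (Phi a) ts t0.
Proof.
  intros Ha He ts t0 Hts Ht0.
  assert (HP : ct2 (fun u v => a v * a v * (Cf a u v * Cf a u v)) ts t0).
  { apply ct2_mult. apply ct2_mult; (apply (ct2_comp1 a (fun u v => v)); [apply ct_a; auto| apply ct2_snd]).
    apply ct2_mult; apply Cf_ct2; auto. }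
  intros eps Heps. destruct (HP eps Heps) as [d [Hd H]].
  exists (Rmin d (Rabs t0)). split. apply Rmin_pos; lra.
  intros u v Hu Hv. generalize (Rmin_l d (Rabs t0)) (Rmin_r d (Rabs t0)); intros.
  assert (Hv0 : v <> 0). { intro C; subst v. rewrite Rminus_0_l, Rabs_Ropp in Hv. lra. }
  assert (Ht0' : t0 <> 0). { intro C; subst t0. rewrite Rabs_R0 in Ht0. lra. }
  unfold Phi. destruct (Req_EM_T v 0); [congruence|]. destruct (Req_EM_T t0 0); [congruence|].
  replace (a v ^ 2 * Cf a u v ^ 2 - a t0 ^ 2 * Cf a ts t0 ^ 2) with
    (a v * a v * (Cf a u v * Cf a u v) - a t0 * a t0 * (Cf a ts t0 * Cf a ts t0)) by ring.
  apply H; lra.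
Qed.

Lemma bound_near G x lo hi : lo <= hi -> (forall s, lo <= s <= hi -> ct2 G x s) ->
  exists d M, 0 < d /\ 0 <= M /\ forall u s, Rabs (u - x) < d -> lo <= s <= hi -> Rabs (G u s) <= M.
Proof.
  intros Hl Hc. destruct (unif_near G x lo hi Hl Hc 1 Rlt_0_1) as [d [Hd H]].
  destruct (bound_on (G x) lo hi Hl) as [M [HM HMb]]. intros; apply ct2_slice, Hc; auto.
  exists d, (M + 1). split; auto. split. lra. intros u s Hu Hs.
  specialize (H u s Hu Hs). specialize (HMb s Hs).
  replace (G u s) with ((G u s - G x s) + G x s) by ring.
  eapply Rle_trans. apply Rabs_triang. lra.
Qed.

Lemma Phi_ct_0 a : regular_scale_factor a -> even_fun a ->
  forall ts, 0 < ts -> forall eps, 0 < eps -> exists d, 0 < d /\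
    forall tau t, Rabs (tau - ts) < d -> Rabs t < d -> Rabs (Phi a tau t) < eps.
Proof.
  intros Ha He ts Hts eps Heps.
  set (e := Rmin 1 eps).
  assert (He0 : 0 < e /\ e <= 1 /\ e <= eps) by (unfold e; split; [apply Rmin_pos; lra| split; [apply Rmin_l|apply Rmin_r]]).
  set (b := sqrt (3 * ts / 2)).
  assert (Hb : b * b = 3 * ts / 2) by (apply sqrt_sqrt; lra).
  assert (Hb0 : 0 <= b) by apply sqrt_pos.
  destruct (bound_near (Kf a) ts 0 b) as [d1 [M [Hd1 [HM HK]]]]. lra.
  intros s Hs. apply Kf_cont; auto. nra.
  set (A1 := a (2 * ts)).
  assert (HA1 : 0 <= A1) by (apply a_nonneg; auto).
  set (ds := Rmin (ts / 4) (e * sqrt (ts / 2) / (2 * (A1 * M + 1)))).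
  assert (Hsq2 : 0 < sqrt (ts / 2)) by (apply sqrt_lt_R0; lra).
  assert (Hds : 0 < ds /\ ds <= ts / 4 /\ ds <= e * sqrt (ts / 2) / (2 * (A1 * M + 1))).
  { unfold ds. split. apply Rmin_pos. lra. apply Rdiv_lt_0_compat. nra. nra.
    split; [apply Rmin_l|apply Rmin_r]. }
  set (X1 := sqrt (ts - ds)).
  assert (HX1 : 0 <= X1) by apply sqrt_pos.
  assert (HX1s : X1 * X1 = ts - ds) by (apply sqrt_sqrt; lra).
  destruct (choose_d0 1 ts X1) as [d0 [Hd0 Hreg]]; try lra.
  destruct (param_cont (Gchi a) ts X1 HX1) with (eps := 1) as [d2 [Hd2 Hpc]]; [|lra|].
  exists d0; split; auto. intros u s Hu Hs. destruct (Hreg u s Hu Hs). apply Gchi_ct2; auto. lra.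
  destruct (ct1_of _ _ (continuous_sqrt (ts - ds)) d2 Hd2) as [d2' [Hd2' Hsq]].
  set (B1 := Rabs (RInt (Gchi a ts) 0 X1) + 1).
  assert (HB1 : 1 <= B1) by (unfold B1; generalize (Rabs_pos (RInt (Gchi a ts) 0 X1)); lra).
  destruct (ct_a a Ha He 0 (e / (2 * (B1 + 1)))) as [d3 [Hd3 Ha0]].
  apply Rdiv_lt_0_compat; lra.
  assert (Ha00 : a 0 = 0) by apply Ha.
  set (d := Rmin (Rmin d1 (ts / 4)) (Rmin ds (Rmin (Rmin d2 d2') d3))).
  assert (Hd : 0 < d) by (unfold d; repeat apply Rmin_pos; lra).
  assert (Hdd : d <= d1 /\ d <= ts / 4 /\ d <= ds /\ d <= d2 /\ d <= d2' /\ d <= d3).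
  { unfold d. generalize (Rmin_l (Rmin d1 (ts / 4)) (Rmin ds (Rmin (Rmin d2 d2') d3)))
      (Rmin_r (Rmin d1 (ts / 4)) (Rmin ds (Rmin (Rmin d2 d2') d3)))
      (Rmin_l d1 (ts / 4)) (Rmin_r d1 (ts / 4)) (Rmin_l ds (Rmin (Rmin d2 d2') d3))
      (Rmin_r ds (Rmin (Rmin d2 d2') d3)) (Rmin_l (Rmin d2 d2') d3) (Rmin_r (Rmin d2 d2') d3)
      (Rmin_l d2 d2') (Rmin_r d2 d2'). lra. }
  exists d. split; auto. intros tau t Htau Ht.
  unfold Phi. destruct (Req_EM_T t 0) as [_|Ht0]. rewrite Rabs_R0; lra.
  assert (Hat : 0 < Rabs t) by (apply Rabs_pos_lt; auto).
  apply Rabs_def2 in Htau.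
  assert (Htau1 : 3 * ts / 4 < tau < 5 * ts / 4) by lra.
  set (q := sqrt (tau - Rabs t)). set (p := sqrt (tau - ds)).
  assert (Hq2 : q * q = tau - Rabs t) by (apply sqrt_sqrt; lra).
  assert (Hp2 : p * p = tau - ds) by (apply sqrt_sqrt; lra).
  assert (Hp0 : sqrt (ts / 2) <= p) by (apply sqrt_le_1_alt; lra).
  assert (Hpq : p <= q) by (apply sqrt_le_1_alt; lra).
  assert (Hq0 : 0 <= q) by apply sqrt_pos.
  assert (Hqb : q <= b) by (unfold q, b; apply sqrt_le_1_alt; lra).
  assert (HGc : forall s, 0 <= s <= q -> ct1 (Gchi a tau) s) by
    (intros s Hs; apply ct2_slice, Gchi_ct2; auto; nra).
  assert (Hapos : 0 < a t) by (apply a_pos; auto).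
  assert (HI1 : Rabs (RInt (Gchi a tau) 0 p) <= B1).
  { assert (Rabs (RInt (Gchi a tau) 0 p - RInt (Gchi a ts) 0 X1) < 1).
    { apply Hpc. apply Rabs_def1; lra. apply sqrt_pos. apply Hsq.
      replace (tau - ds - (ts - ds)) with (tau - ts) by ring. apply Rabs_def1; lra. }
    unfold B1. generalize (Rabs_triang_inv (RInt (Gchi a tau) 0 p) (RInt (Gchi a ts) 0 X1)). lra. }
  assert (HJ0 : 0 <= RInt (Gchi a tau) p q).
  { apply RInt_ge_0; auto. apply (exRInt_on _ 0 q); auto; lra.
    intros x Hx. apply Gchi_nonneg; auto; nra. }
  assert (HJ : RInt (Gchi a tau) p q <= (q - p) * (a tau / a t * M)).
  { replace ((q - p) * (a tau / a t * M)) with (RInt (fun _ => a tau / a t * M) p q)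
      by (rewrite RInt_const; reflexivity).
    apply RInt_le; auto. apply (exRInt_on _ 0 q); auto; lra.
    apply (ex_RInt_const (V:=R_CompleteNormedModule)).
    intros x Hx. unfold Gchi.
    assert (Hu : a t <= a (tau - x * x)) by (apply a_le; auto; rewrite (Rabs_pos_eq (tau - x * x)); nra).
    assert (HKx : Kf a tau x <= M) by (eapply Rle_trans; [apply Rle_abs| apply HK; [apply Rabs_def1; lra| lra]]).
    assert (HK0 : 0 < Kf a tau x) by (apply Kf_pos; auto; nra).
    apply Rmult_le_compat; auto. unfold Rdiv. apply Rmult_le_pos. apply a_nonneg; auto.
    left; apply Rinv_0_lt_compat; lra. lra.
    unfold Rdiv. apply Rmult_le_compat_l. apply a_nonneg; auto. apply Rinv_le_contravar; auto. }
  assert (Hqp : q - p <= ds / sqrt (ts / 2)).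
  { generalize (sqrt_diff_bound (tau - Rabs t) (tau - ds)); fold q p; intros HH.
    assert (q - p <= Rabs ((tau - Rabs t) - (tau - ds)) / p) by
      (eapply Rle_trans; [apply Rle_abs| apply HH; lra]).
    rewrite Rabs_pos_eq in H by lra.
    eapply Rle_trans. apply H. unfold Rdiv. apply Rmult_le_compat. lra.
    left; apply Rinv_0_lt_compat; lra. lra. apply Rinv_le_contravar; lra. }
  assert (Hatau : a tau <= A1) by (apply a_le; auto; rewrite !Rabs_pos_eq; lra).
  assert (HaJ : a t * RInt (Gchi a tau) p q < e / 2).
  { apply Rle_lt_trans with (a tau * M * (q - p)).
    replace (a tau * M * (q - p)) with (a t * ((q - p) * (a tau / a t * M))) by (field; lra).
    apply Rmult_le_compat_l; lra.
    apply Rle_lt_trans with (A1 * M * (ds / sqrt (ts / 2))).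
    apply Rmult_le_compat; try lra. apply Rmult_le_pos; auto. apply a_nonneg; auto.
    apply Rmult_le_compat_r; auto.
    destruct Hds as (_&_&Hds3).
    apply Rle_lt_trans with (A1 * M * (e * sqrt (ts / 2) / (2 * (A1 * M + 1)) / sqrt (ts / 2))).
    apply Rmult_le_compat_l. apply Rmult_le_pos; auto. unfold Rdiv. apply Rmult_le_compat_r; auto.
    left; apply Rinv_0_lt_compat; lra.
    replace (A1 * M * (e * sqrt (ts / 2) / (2 * (A1 * M + 1)) / sqrt (ts / 2))) with
      (e / 2 * (A1 * M / (A1 * M + 1))) by (field; split; nra).
    assert (A1 * M / (A1 * M + 1) < 1).
    { apply (Rmult_lt_reg_r (A1 * M + 1)). nra. unfold Rdiv. rewrite Rmult_assoc, Rinv_l by nra. nra. }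
    nra. }
  assert (Hat2 : a t < e / (2 * (B1 + 1))).
  { specialize (Ha0 t). rewrite Ha00, !Rminus_0_r in Ha0. rewrite (Rabs_pos_eq (a t)) in Ha0 by lra. apply Ha0. lra. }
  assert (HaI : a t * RInt (Gchi a tau) 0 p <= e / 2).
  { eapply Rle_trans. apply Rle_abs. rewrite Rabs_mult, (Rabs_pos_eq (a t)) by lra.
    apply Rle_trans with (e / (2 * (B1 + 1)) * B1). apply Rmult_le_compat; try lra. apply Rabs_pos.
    replace (e / (2 * (B1 + 1)) * B1) with (e / 2 * (B1 / (B1 + 1))) by (field; lra).
    assert (B1 / (B1 + 1) <= 1).
    { apply (Rmult_le_reg_r (B1 + 1)). lra. unfold Rdiv. rewrite Rmult_assoc, Rinv_l by lra. lra. }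
    nra. }
  assert (HCf : Cf a tau t = RInt (Gchi a tau) 0 p + RInt (Gchi a tau) p q).
  { unfold Cf. fold q. rewrite <- (RInt_diff _ 0 q q p) by (auto; lra). symmetry; apply Rplus_minus. }
  assert (HC0 : 0 <= Cf a tau t).
  { unfold Cf. fold q. apply RInt_ge_0; auto. apply (exRInt_on _ 0 q); auto; lra.
    intros x Hx. apply Gchi_nonneg; auto; nra. }
  set (B := a t * Cf a tau t).
  assert (HB : 0 <= B < e).
  { unfold B. split. apply Rmult_le_pos; lra. rewrite HCf, Rmult_plus_distr_l. lra. }
  replace (a t ^ 2 * Cf a tau t ^ 2) with (B * B) by (unfold B; ring).
  rewrite Rabs_pos_eq by nra. nra.
Qed.

Lemma Phi_ct a : regular_scale_factor a -> even_fun a ->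
  forall ts t0, 0 < ts -> Rabs t0 < ts -> ct2 (Phi a) ts t0.
Proof.
  intros Ha He ts t0 Hts Ht0. destruct (Req_dec t0 0) as [->|Hn].
  - intros eps Heps. destruct (Phi_ct_0 a Ha He ts Hts eps Heps) as [d [Hd H]].
    exists d; split; auto. intros u v Hu Hv. unfold Phi at 2. destruct (Req_EM_T 0 0); [|congruence].
    rewrite Rminus_0_r. rewrite Rminus_0_r in Hv. auto.
  - apply Phi_ct_nz; auto. split; auto. apply Rabs_pos_lt; auto.
Qed.

Lemma rhoM_pos a : regular_scale_factor a -> even_fun a -> forall tau, 0 < tau -> 0 < rhoM a tau.
Proof.
  intros Ha He tau Ht. rewrite rhoM_eq by auto.
  assert (Rf a tau (tau / 2) < Rf a tau 0) by (apply Rf_decr; auto; lra).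
  assert (0 <= Rf a tau (tau / 2)).
  { set (S := sqrt (tau - tau / 2)).
    assert (HS : S * S = tau - tau / 2) by (apply sqrt_sqrt; lra).
    assert (HS0 : 0 <= S) by apply sqrt_pos.
    assert (Hr : forall s, 0 <= s <= S -> s * s < 2 * tau) by (intros; nra).
    unfold Rf. fold S. apply RInt_ge_0. auto.
    apply (exRInt_on _ 0 S); try lra. intros s Hs. apply ct2_slice, Ga_ct2; auto.
    intros s Hs. apply Ga_nonneg; auto. apply Hr; lra. }
  lra.
Qed.

Lemma gthth_lim a : regular_scale_factor a -> even_fun a -> forall tau, 0 < tau -> is_lim (gthth_t0 a tau) 0 0.
Proof.
  intros Ha He tau Ht. apply is_lim_spec. intros eps.
  destruct (Phi_ct_0 a Ha He tau Ht eps (cond_pos eps)) as [d [Hd H]].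
  simpl. unfold locally', within. assert (Hp : 0 < Rmin d tau) by (apply Rmin_pos; lra).
  exists (mkposreal _ Hp). intros y Hy Hy0. apply ball_R in Hy. cbn [pos] in Hy.
  generalize (Rmin_l d tau) (Rmin_r d tau); intros.
  rewrite Rminus_0_r in Hy.
  assert (Hay : Rabs y < Rmin d tau) by (apply Rabs_def1; lra).
  specialize (H tau y). rewrite Rminus_eq_0, Rabs_R0 in H. specialize (H Hd).
  unfold Phi in H. destruct (Req_EM_T y 0); [congruence|].
  rewrite Rminus_0_r. unfold gthth_t0. unfold Cf in H. rewrite chi_eq; auto.
  apply H. lra. split. apply Rabs_pos_lt; auto. lra.
Qed.

Lemma t0f_rhoM a : regular_scale_factor a -> even_fun a -> forall tau, 0 < tau -> t0f a tau (rhoM a tau) = 0.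
Proof.
  intros Ha He tau Ht. assert (Hr := rhoM_pos a Ha He tau Ht).
  destruct (t0f_spec a Ha He tau (rhoM a tau) Ht) as [H1 H2]. lra.
  apply (Rf_inj a Ha He tau); auto. lra. rewrite H2. apply rhoM_eq; auto.
Qed.

Lemma gthth_eq a : regular_scale_factor a -> even_fun a ->
  forall tau rho, 0 < tau -> 0 < rho < 2 * rhoM a tau -> g_thth a tau rho = Phi a tau (t0f a tau rho).
Proof.
  intros Ha He tau rho Ht Hr. destruct (t0f_spec a Ha He tau rho Ht Hr) as [H1 H2].
  unfold g_thth, Phi. destruct (Req_EM_T (t0f a tau rho) 0) as [E|E].
  - rewrite (is_lim_unique _ _ _ (gthth_lim a Ha He tau Ht)). reflexivity.
  - unfold gthth_t0, Cf. rewrite chi_eq; auto. split. apply Rabs_pos_lt; auto. apply Rabs_def1; lra.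
Qed.

Lemma gthth_cont a : regular_scale_factor a -> even_fun a ->
  forall taus rhos, 0 < taus -> 0 < rhos < 2 * rhoM a taus ->
  forall eps, 0 < eps -> exists d, 0 < d /\ forall tau rho, Rabs (tau - taus) < d -> Rabs (rho - rhos) < d ->
    0 < tau -> 0 < rho < 2 * rhoM a tau -> Rabs (g_thth a tau rho - g_thth a taus rhos) < eps.
Proof.
  intros Ha He taus rhos Hts Hrs eps Heps.
  destruct (t0f_spec a Ha He taus rhos Hts Hrs) as [Hb _].
  destruct (Phi_ct a Ha He taus (t0f a taus rhos) Hts (ltac:(apply Rabs_def1; lra)) eps Heps) as [d1 [Hd1 H1]].
  destruct (t0f_cont a Ha He taus rhos Hts Hrs d1 Hd1) as [d2 [Hd2 H2]].
  exists (Rmin d1 d2). split. apply Rmin_pos; auto. intros tau rho Htau Hrho Ht Hr.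
  generalize (Rmin_l d1 d2) (Rmin_r d1 d2); intros.
  rewrite !gthth_eq by auto. apply H1. lra. apply H2; auto; lra.
Qed.

Lemma rho_max_le a tau : rho_max a tau <= 2 * rhoM a tau.
Proof.
  unfold rho_max. set (E := fun rho => 0 < rho < 2 * rhoM a tau /\ g_tautau a tau rho = 0).
  generalize (Glb_Rbar_correct E). destruct (Glb_Rbar E) as [x| |]; intros [Hlb Hg]; try lra.
  destruct (classic (exists r, E r)) as [[r Hr]|Hn].
  - specialize (Hlb r Hr). simpl in Hlb. destruct Hr as [[_ Hr] _]. lra.
  - exfalso. assert (Hb : is_lb_Rbar E (Finite (x + 1))). { intros r Hr. exfalso. apply Hn. exists r; auto. }
    specialize (Hg _ Hb). simpl in Hg. lra.
Qed.

Lemma sin2_ct x : ct1 (fun t => sin t ^ 2) x.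
Proof.
  apply (ct2_slice (fun _ t => sin t ^ 2) 0 x). apply (ct2_ext (fun _ t => sin t * sin t)). intros; ring.
  apply ct2_mult; (apply (ct2_comp1 sin (fun _ v => v)); [apply ct1_of; apply continuity_pt_filterlim; apply continuity_sin| apply ct2_snd]).
Qed.

Theorem corollary7p4 (a : R -> R) :
  regular_scale_factor a ->
  even_fun a ->
  ((exists l, 0 < l /\ filterlim (Derive a) (at_right 0) (locally l)) \/
   (is_derive a 0 0 /\ exists n : nat, ex_derive_n a n 0 /\ Derive_n a n 0 <> 0)) ->
  (forall c1 c2 (p : R * R * R * R), D_polar a c1 c2 p ->
     filterlim (fun q : R * R * R * R => let '(tau, rho, _, _) := q in g_thth a tau rho)
       (within (D_polar a c1 c2) (locally p))
       (locally (let '(tau, rho, _, _) := p in g_thth a tau rho)) /\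
     filterlim (fun q : R * R * R * R => let '(tau, rho, theta, _) := q in g_phph a tau rho theta)
       (within (D_polar a c1 c2) (locally p))
       (locally (let '(tau, rho, theta, _) := p in g_phph a tau rho theta))) /\
  (forall tau, 0 < tau ->
     is_lim (gthth_t0 a tau) 0 0 /\
     g_thth a tau (rhoM a tau) = 0 /\
     (forall theta, g_phph a tau (rhoM a tau) theta = 0)).
Proof.
  intros Ha He _.
  assert (P2 : forall tau, 0 < tau -> g_thth a tau (rhoM a tau) = 0).
  { intros tau Ht. unfold g_thth. rewrite t0f_rhoM by auto.
    destruct (Req_EM_T 0 0) as [_|C]; [|congruence].
    rewrite (is_lim_unique _ _ _ (gthth_lim a Ha He tau Ht)). reflexivity. }
  split.
  - intros c1 c2 [[[taus rhos] thetas] phis] HD.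
    destruct HD as (Hts & Hrs & _ & _).
    assert (Hrs' : 0 < rhos < 2 * rhoM a taus) by (generalize (rho_max_le a taus); lra).
    split.
    + apply filterlim_locally. intros eps.
      destruct (gthth_cont a Ha He taus rhos Hts Hrs' eps (cond_pos eps)) as [d [Hd H]].
      exists (mkposreal _ Hd). intros [[[tau rho] theta] phi] [[[Hb1 Hb2] Hb3] Hb4] HD.
      destruct HD as (Ht & Hr & _ & _).
      apply ball_R in Hb1. apply ball_R in Hb2. cbn [fst snd pos] in *.
      apply ballR. apply H. apply Rabs_def1; lra. apply Rabs_def1; lra. auto.
      generalize (rho_max_le a tau); lra.
    + apply filterlim_locally. intros eps.
      set (gs := g_thth a taus rhos).
      destruct (gthth_cont a Ha He taus rhos Hts Hrs' (eps / 2)) as [d [Hd H]].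
      generalize (cond_pos eps); lra.
      destruct (sin2_ct thetas (eps / (2 * (Rabs gs + 1)))) as [d' [Hd' H']].
      apply Rdiv_lt_0_compat. generalize (cond_pos eps); lra. generalize (Rabs_pos gs); lra.
      assert (Hm : 0 < Rmin d d') by (apply Rmin_pos; auto).
      exists (mkposreal _ Hm). intros [[[tau rho] theta] phi] [[[Hb1 Hb2] Hb3] Hb4] HD.
      destruct HD as (Ht & Hr & _ & _).
      apply ball_R in Hb1. apply ball_R in Hb2. apply ball_R in Hb3. cbn [fst snd pos] in *.
      generalize (Rmin_l d d') (Rmin_r d d'); intros.
      apply ballR. unfold g_phph. fold gs.
      assert (A1 : Rabs (g_thth a tau rho - gs) < eps / 2).
      { apply H. apply Rabs_def1; lra. apply Rabs_def1; lra. auto. generalize (rho_max_le a tau); lra. }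
      assert (A2 : Rabs (sin theta ^ 2 - sin thetas ^ 2) < eps / (2 * (Rabs gs + 1))) by (apply H'; apply Rabs_def1; lra).
      assert (S1 : 0 <= sin theta ^ 2 <= 1).
      { generalize (SIN_bound theta); intros. split. nra. nra. }
      replace (g_thth a tau rho * sin theta ^ 2 - gs * sin thetas ^ 2)
        with ((g_thth a tau rho - gs) * sin theta ^ 2 + gs * (sin theta ^ 2 - sin thetas ^ 2)) by ring.
      eapply Rle_lt_trans. apply Rabs_triang. rewrite !Rabs_mult.
      rewrite (Rabs_pos_eq (sin theta ^ 2)) by lra.
      assert (Rabs (g_thth a tau rho - gs) * sin theta ^ 2 <= Rabs (g_thth a tau rho - gs)).
      { generalize (Rabs_pos (g_thth a tau rho - gs)); nra. }
      assert (Rabs gs * Rabs (sin theta ^ 2 - sin thetas ^ 2) <= eps / 2).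
      { apply Rle_trans with (Rabs gs * (eps / (2 * (Rabs gs + 1)))).
        apply Rmult_le_compat_l. apply Rabs_pos. lra.
        replace (Rabs gs * (eps / (2 * (Rabs gs + 1)))) with (eps / 2 * (Rabs gs / (Rabs gs + 1))).
        2: { field. generalize (Rabs_pos gs); lra. }
        assert (Rabs gs / (Rabs gs + 1) <= 1).
        { generalize (Rabs_pos gs); intros. apply (Rmult_le_reg_r (Rabs gs + 1)). lra.
          unfold Rdiv. rewrite Rmult_assoc, Rinv_l by lra. lra. }
        generalize (cond_pos eps); nra. }
      lra.
  - intros tau Ht. split. apply gthth_lim; auto. split. apply P2; auto.
    intros theta. unfold g_phph. rewrite P2 by auto. ring.
Qed.
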